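(* Let $S^1=\mathbb{R}/2\pi\mathbb{Z}$, identify $\mathcal{C}(S^1)=S^1\times(0,\infty)$ (metric $r^2\mathrm{d}\theta^2+\mathrm{d}r^2$) isometrically with $\mathbb{R}^2\setminus\{0\}$ via $(\theta,r)\mapsto re^{i\theta}$. Let $t_0<t_1$, let $t\mapsto\varphi(t)$, $t\in[t_0,t_1]$, be a smooth curve of orientation-preserving diffeomorphisms of $S^1$, set $\lambda(t)=\sqrt{\partial_x\varphi(t)}$, and suppose there is a smooth $p:[t_0,t_1]\times S^1\to\mathbb{R}$ with $$\ddot\varphi+2\frac{\dot\lambda}{\lambda}\dot\varphi=-\tfrac12(\partial_x p)\circ\varphi,\qquad \ddot\lambda-\lambda\dot\varphi^2=-\lambda\,p\circ\varphi .$$ Let $\Psi_{p(t)}(x,r)=\tfrac12 r^2p(t,x)$ on $\mathbb{R}^2\setminus\{0\}$ and assume that $(t_1-t_0)^2\,|\langle w,\nabla^2\Psi_{p(t)}(x,r)\,w\rangle|<\pi^2\|w\|^2$ for all $t\in[t_0,t_1]$, all $(x,r)$ and all $w\in\mathbb{R}^2$ (Euclidean Hessian and norm). Then for every smooth curve $t\mapsto\varphi_0(t)$ of orientation-preserving diffeomorphisms of $S^1$ with $\lambda_0(t)=\sqrt{\partial_x\varphi_0(t)}$ and $\varphi_0(t_i)=\varphi(t_i)$ for $i=0,1$, $$\int_{t_0}^{t_1}\!\!\int_{S^1}\big(\lambda^2\dot\varphi^2+\dot\lambda^2\big)\,\mathrm{d}x\,\mathrm{d}t\le\int_{t_0}^{t_1}\!\!\int_{S^1}\big(\lambda_0^2\dot\varphi_0^2+\dot\lambda_0^2\big)\,\mathrm{d}x\,\mathrm{d}t,$$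 with equality if and only if $(\varphi_0,\lambda_0)=(\varphi,\lambda)$ on $[t_0,t_1]$.
   Context: The system above is the geodesic equation of the right-invariant metric $\int_{S^1}u^2+\tfrac14(\partial_xu)^2\,\mathrm{d}x$ on $\mathrm{Diff}(S^1)$ (i.e. the Camassa-Holm equation $\partial_tu-\frac14\partial_{txx}u+3\partial_xu\,u-\frac12\partial_{xx}u\,\partial_xu-\frac14\partial_{xxx}u\,u=0$, $\partial_t\varphi=u\circ\varphi$) written for the map $x\mapsto(\varphi(x),\lambda(x))\in\mathcal{C}(S^1)$. The integrand $\lambda^2\dot\varphi^2+\dot\lambda^2$ is the squared Euclidean norm of $\partial_t\big(\lambda e^{i\varphi}\big)$. *)

(* Defs.v *)
From Stdlib Require Export Reals Lra ZArith.
Open Scope R_scope.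

(* A function on S^1 = R/2piZ is a
   2pi-periodic function on R; an orientation-preserving diffeomorphism of
   S^1 is represented by a lift R -> R with phi(x + 2pi) = phi(x) + 2pi and
   positive derivative. *)

Definition pd_t (f ft : R -> R -> R) : Prop :=
  forall t x, derivable_pt_lim (fun s => f s x) t (ft t x).

Definition pd_x (f fx : R -> R -> R) : Prop :=
  forall t x, derivable_pt_lim (fun y => f t y) x (fx t x).

Definition cont2 (f : R -> R -> R) : Prop :=
  forall t x eps, 0 < eps -> exists d, 0 < d /\
    forall s y, Rabs (s - t) < d -> Rabs (y - x) < d ->
      Rabs (f s y - f t x) < eps.

(* C^infinity on R^2: all partial derivatives of all orders exist and are
   jointly continuous. *)
CoInductive smooth2 (f : R -> R -> R) : Prop :=
  smooth2_intro : forall ft fx : R -> R -> R,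
    cont2 f -> pd_t f ft -> pd_x f fx -> smooth2 ft -> smooth2 fx ->
    smooth2 f.

Definition periodic_x (f : R -> R -> R) : Prop :=
  forall t x, f t (x + 2 * PI) = f t x.

Definition circle_lift (phi : R -> R -> R) : Prop :=
  forall t x, phi t (x + 2 * PI) = phi t x + 2 * PI.

Definition lam (phix : R -> R -> R) : R -> R -> R :=
  fun t x => sqrt (phix t x).

Definition is_RInt (f : R -> R) (a b v : R) : Prop :=
  exists pr : Riemann_integrable f a b, RiemannInt pr = v.

Definition energy (phit phix lamt : R -> R -> R) (t0 t1 E : R) : Prop :=
  exists I : R -> R,
    (forall t, t0 <= t <= t1 ->
       is_RInt (fun x => lam phix t x ^ 2 * phit t x ^ 2 + lamt t x ^ 2)
               0 (2 * PI) (I t)) /\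
    is_RInt I t0 t1 E.

(* The function Psi(y) = 1/2 |y|^2 q(arg y) on R^2 \ {0}, written in
   Cartesian coordinates y = (y1, y2) near the ray of angle x, where the
   angle is computed as x + atan(v/u) with (u, v) the coordinates of y
   rotated by -x (valid for u > 0, i.e. in a neighbourhood of r e^{ix}). *)
Definition Psi_loc (q : R -> R) (x y1 y2 : R) : R :=
  let u := y1 * cos x + y2 * sin x in
  let v := - y1 * sin x + y2 * cos x in
  / 2 * (y1 ^ 2 + y2 ^ 2) * q (x + atan (v / u)).

(* h = < w, Hess Psi (r e^{ix}) w > (Euclidean Hessian), i.e. the second
   derivative at s = 0 of s |-> Psi(r e^{ix} + s w). *)
Definition hess_form (q : R -> R) (x r w1 w2 h : R) : Prop :=
  let g := fun s => Psi_loc q x (r * cos x + s * w1) (r * sin x + s * w2) in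
  exists g1 : R -> R, exists d, 0 < d /\
    (forall s, Rabs s < d -> derivable_pt_lim g s (g1 s)) /\
    derivable_pt_lim g1 0 h.

(* Main.v *)
Require Import Defs.
From Stdlib Require Import Reals Lra Lia ZArith FunctionalExtensionality.
From Coquelicot Require Import Coquelicot.
Open Scope R_scope.

Lemma per_Z (f : R -> R) : (forall x, f (x + 2 * PI) = f x) ->
  forall (k : Z) x, f (x + 2 * IZR k * PI) = f x.
Proof.
  intros Hf.
  assert (Hn : forall (n : nat) x, f (x + 2 * INR n * PI) = f x).
  { induction n; intros x.
    - simpl; f_equal; ring.
    - rewrite S_INR. replace (x + 2 * (INR n + 1) * PI) with ((x + 2 * INR n * PI) + 2 * PI) by ring.
      rewrite Hf; apply IHn. }
  intros k x. destruct k as [|p|p].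
  - simpl. f_equal; ring.
  - replace (IZR (Z.pos p)) with (INR (Pos.to_nat p)) by (rewrite INR_IZR_INZ, positive_nat_Z; reflexivity). apply Hn.
  - replace (IZR (Z.neg p)) with (- INR (Pos.to_nat p)).
    2:{ rewrite INR_IZR_INZ, positive_nat_Z. rewrite <- opp_IZR. reflexivity. }
    rewrite <- (Hn (Pos.to_nat p) (x + 2 * - INR (Pos.to_nat p) * PI)).
    f_equal; ring.
Qed.

Lemma angle_eq (a b : R) : cos a = cos b -> sin a = sin b ->
  exists k : Z, a = b + 2 * IZR k * PI.
Proof.
  intros Hc Hs.
  assert (H1 : cos (a - b) = 1).
  { rewrite cos_minus, Hc, Hs. pose proof (sin2_cos2 b). unfold Rsqr in H. lra. }
  assert (H2 : sin ((a - b) / 2) = 0).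
  { pose proof (cos_2a_sin ((a - b) / 2)).
    replace (2 * ((a - b) / 2)) with (a - b) in H by field. nra. }
  destruct (sin_eq_0_0 _ H2) as [k Hk]. exists k. lra.
Qed.

Lemma polar (x y1 y2 : R) :
  let u := y1 * cos x + y2 * sin x in
  let v := - y1 * sin x + y2 * cos x in
  0 < u ->
  y1 = sqrt (y1 ^ 2 + y2 ^ 2) * cos (x + atan (v / u)) /\
  y2 = sqrt (y1 ^ 2 + y2 ^ 2) * sin (x + atan (v / u)).
Proof.
  intros u v Hu.
  assert (Huv : y1 ^ 2 + y2 ^ 2 = u ^ 2 + v ^ 2).
  { unfold u, v. pose proof (sin2_cos2 x). unfold Rsqr in H. nra. }
  assert (Hs : sqrt (1 + (v / u)²) = sqrt (u^2 + v^2) / u).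
  { replace (1 + (v/u)²) with ((u^2+v^2) / u^2) by (unfold Rsqr; field; lra).
    rewrite sqrt_div_alt by nra. f_equal.
    replace (u^2) with (u²) by (unfold Rsqr; ring). apply sqrt_Rsqr; lra. }
  assert (Hpos : 0 < sqrt (u^2 + v^2)) by (apply sqrt_lt_R0; nra).
  rewrite cos_plus, sin_plus, cos_atan, sin_atan, Hs, Huv.
  assert (Hc := sin2_cos2 x). unfold Rsqr in Hc.
  unfold u, v in *. split; field_simplify; try lra.
  all: try (split; lra).
  all: nra.
Qed.

Lemma dlim_cont f x l : derivable_pt_lim f x l -> continuity_pt f x.
Proof. intros H. apply derivable_continuous_pt. exists l; exact H. Qed.

Lemma angle_rel (x b y1 y2 : R) :
  0 < y1 * cos x + y2 * sin x -> 0 < y1 * cos b + y2 * sin b ->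
  exists k : Z, x + atan ((- y1 * sin x + y2 * cos x) / (y1 * cos x + y2 * sin x))
     = b + atan ((- y1 * sin b + y2 * cos b) / (y1 * cos b + y2 * sin b)) + 2 * IZR k * PI.
Proof.
  intros H1 H2.
  destruct (polar x y1 y2 H1) as [E1 E2].
  destruct (polar b y1 y2 H2) as [F1 F2].
  set (r := sqrt (y1 ^ 2 + y2 ^ 2)) in *.
  assert (Hr : 0 < r).
  { unfold r; apply sqrt_lt_R0.
    destruct (Req_dec y1 0); destruct (Req_dec y2 0); try nra. }
  apply angle_eq; apply (Rmult_eq_reg_l r); lra.
Qed.

Lemma Psi_loc_indep (q : R -> R) (Hq : forall x, q (x + 2 * PI) = q x)
  (x b y1 y2 : R) :
  0 < y1 * cos x + y2 * sin x -> 0 < y1 * cos b + y2 * sin b ->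
  Defs.Psi_loc q x y1 y2 = Defs.Psi_loc q b y1 y2.
Proof.
  intros H1 H2. unfold Defs.Psi_loc.
  destruct (angle_rel x b y1 y2 H1 H2) as [k Hk]. rewrite Hk.
  rewrite (per_Z q Hq). reflexivity.
Qed.

Lemma taylor2 (g G1 G2 : R -> R) (K d : R) : 0 < d ->
  (forall s, -d < s < 1 + d -> derivable_pt_lim g s (G1 s)) ->
  (forall s, 0 <= s <= 1 -> derivable_pt_lim G1 s (G2 s)) ->
  (forall s, 0 <= s <= 1 -> G2 s < K) ->
  g 1 - g 0 - G1 0 < K / 2.
Proof.
  intros Hd Hg HG1 HG2.
  assert (Hk : forall s, 0 < s <= 1 -> G1 s - K * s < G1 0).
  { intros s Hs.
    destruct (MVT_gen (fun s => G1 s - K * s) 0 s (fun s => G2 s - K)) as [c [Hc Hc2]].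
    - intros y Hy. rewrite Rmin_left in Hy by lra. rewrite Rmax_right in Hy by lra.
      apply is_derive_Reals. replace (G2 y - K) with (G2 y - K * 1) by ring.
      apply derivable_pt_lim_minus. apply HG1; lra.
      apply derivable_pt_lim_scal. apply derivable_pt_lim_id.
    - intros y Hy. rewrite Rmin_left in Hy by lra. rewrite Rmax_right in Hy by lra.
      apply continuity_pt_minus. apply (dlim_cont _ _ _ (HG1 y ltac:(lra))).
      apply continuity_pt_scal. apply derivable_continuous_pt. apply derivable_pt_id.
    - rewrite Rmin_left in Hc by lra. rewrite Rmax_right in Hc by lra.
      assert (G2 c < K) by (apply HG2; lra). simpl in Hc2. nra. }
  set (m := fun s => g s - (K * s ^ 2 / 2 + G1 0 * s)).
  assert (Hm : forall y, -d < y < 1 + d -> derivable_pt_lim m y (G1 y - K * y - G1 0)).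
  { intros y Hy. unfold m.
    replace (G1 y - K * y - G1 0) with (G1 y - (K * y + G1 0)) by ring.
    apply (derivable_pt_lim_minus g (fun s => K * s ^ 2 / 2 + G1 0 * s)).
    apply Hg; lra.
    apply is_derive_Reals. auto_derive; [auto| field]. }
  assert (Hmc : forall y, -d < y < 1 + d -> continuity_pt m y).
  { intros y Hy. exact (dlim_cont _ _ _ (Hm y Hy)). }
  destruct (MVT_gen m 0 (1/2) (fun y => G1 y - K * y - G1 0)) as [c1 [Hc1 E1]].
  { intros y Hy. rewrite Rmin_left in Hy by lra. rewrite Rmax_right in Hy by lra.
    apply is_derive_Reals, Hm; lra. }
  { intros y Hy. rewrite Rmin_left in Hy by lra. rewrite Rmax_right in Hy by lra.
    apply Hmc; lra. }
  destruct (MVT_gen m (1/2) 1 (fun y => G1 y - K * y - G1 0)) as [c2 [Hc2 E2]].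
  { intros y Hy. rewrite Rmin_left in Hy by lra. rewrite Rmax_right in Hy by lra.
    apply is_derive_Reals, Hm; lra. }
  { intros y Hy. rewrite Rmin_left in Hy by lra. rewrite Rmax_right in Hy by lra.
    apply Hmc; lra. }
  rewrite Rmin_left in Hc1, Hc2 by lra. rewrite Rmax_right in Hc1, Hc2 by lra.
  assert (A2 : G1 c2 - K * c2 - G1 0 < 0) by (specialize (Hk c2 ltac:(lra)); lra).
  assert (A1 : G1 c1 - K * c1 - G1 0 <= 0).
  { destruct (Req_dec c1 0) as [->|]. lra. specialize (Hk c1 ltac:(lra)); lra. }
  unfold m in E1, E2. simpl in E1, E2. nra.
Qed.

Lemma dshift f s x l : derivable_pt_lim f (s + x) l ->
  derivable_pt_lim (fun y => f (s + y)) x l.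
Proof.
  intros H. apply is_derive_Reals. apply is_derive_Reals in H.
  assert (H2 : is_derive (fun y : R => s + y) x 1).
  { auto_derive; auto; ring. }
  pose proof (is_derive_comp f (fun y => s + y) x l 1 H H2) as H3.
  replace l with (scal 1 l). exact H3. unfold scal; simpl; unfold mult; simpl; ring.
Qed.


Lemma cos_2PI_per x : cos (x + 2 * PI) = cos x.
Proof. rewrite cos_plus, cos_2PI, sin_2PI. ring. Qed.
Lemma sin_2PI_per x : sin (x + 2 * PI) = sin x.
Proof. rewrite sin_plus, cos_2PI, sin_2PI. ring. Qed.

Lemma locally_abs (s0 d : R) : Rabs s0 < d -> locally s0 (fun s => Rabs s < d).
Proof.
  intros H. assert (Hp : 0 < d - Rabs s0) by lra.
  exists (mkposreal _ Hp). intros y Hy. simpl in Hy.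
  unfold ball in Hy; simpl in Hy; unfold AbsRing_ball, abs, minus, plus, opp in Hy; simpl in Hy.
  pose proof (Rabs_triang_inv y s0). unfold Rminus in H0. lra.
Qed.

Lemma Psi_loc_polar (q : R -> R) (a l : R) :
  Psi_loc q a (l * cos a) (l * sin a) = / 2 * l ^ 2 * q a.
Proof.
  unfold Psi_loc.
  assert (Hc := sin2_cos2 a). unfold Rsqr in Hc.
  replace (- (l * cos a) * sin a + l * sin a * cos a) with 0 by ring.
  unfold Rdiv. rewrite Rmult_0_l, atan_0, Rplus_0_r.
  f_equal. f_equal. replace ((l * cos a) ^ 2 + (l * sin a) ^ 2) with (l^2 * (sin a * sin a + cos a * cos a)) by ring.
  rewrite Hc; ring.
Qed.

Section RB.
Variables (q q1 q2 : R -> R) (T : R).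
Hypothesis HT : 0 < T.
Hypothesis Hq : forall x, q (x + 2 * PI) = q x.
Hypothesis Hq1 : forall x, q1 (x + 2 * PI) = q1 x.
Hypothesis Dq : forall x, derivable_pt_lim q x (q1 x).
Hypothesis Dq1 : forall x, derivable_pt_lim q1 x (q2 x).
Hypothesis HB : forall x r w1 w2 h, 0 < r -> (w1 <> 0 \/ w2 <> 0) ->
  hess_form q x r w1 w2 h -> T ^ 2 * Rabs h < PI ^ 2 * (w1 ^ 2 + w2 ^ 2).

Lemma radial (th : R) : T ^ 2 * Rabs (q th) < PI ^ 2.
Proof.
  assert (Hc := sin2_cos2 th). unfold Rsqr in Hc.
  assert (Hw : cos th <> 0 \/ sin th <> 0).
  { destruct (Req_dec (cos th) 0); [right|left]; auto. intro. nra. }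
  assert (H := HB th 1 (cos th) (sin th) (q th) Rlt_0_1 Hw).
  replace (PI ^ 2 * (cos th ^ 2 + sin th ^ 2)) with (PI ^ 2) in H by (simpl; nra).
  apply H. unfold hess_form.
  exists (fun s => (1 + s) * q th), 1. split; [lra|split].
  - intros s _.
    apply (derivable_pt_lim_ext (fun s => / 2 * (1 + s) ^ 2 * q th)).
    + intros y. rewrite <- (Psi_loc_polar q th (1 + y)). replace (1 * cos th + y * cos th) with ((1+y) * cos th) by ring. replace (1 * sin th + y * sin th) with ((1+y) * sin th) by ring. reflexivity.
    + apply is_derive_Reals. auto_derive; [auto|field].
  - apply is_derive_Reals. auto_derive; [auto|ring].
Qed.

Section Gen.
Variables (b Y1 Y2 e1 e2 : R).
Definition uu s := (Y1 + s * e1) * cos b + (Y2 + s * e2) * sin b.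
Definition vv s := - (Y1 + s * e1) * sin b + (Y2 + s * e2) * cos b.
Definition du := e1 * cos b + e2 * sin b.
Definition dv := - e1 * sin b + e2 * cos b.
Definition Th s := b + atan (vv s / uu s).
Definition Thd s := (dv * uu s - vv s * du) / (uu s ^ 2 + vv s ^ 2).
Definition gg s := Psi_loc q b (Y1 + s * e1) (Y2 + s * e2).
Definition GG1 s := ((Y1 + s * e1) * e1 + (Y2 + s * e2) * e2) * q (Th s)
   + / 2 * ((Y1 + s * e1) ^ 2 + (Y2 + s * e2) ^ 2) * (q1 (Th s) * Thd s).

Lemma dgg s : 0 < uu s -> derivable_pt_lim gg s (GG1 s).
Proof.
  intros Hu. apply is_derive_Reals. unfold gg, Psi_loc, GG1, Th, Thd.
  unfold uu, vv, du, dv in *.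
  assert (HU0 : (Y1 + s * e1) * cos b + (Y2 + s * e2) * sin b <> 0) by lra.
  auto_derive.
  - split; [|split; [exact HU0|auto]]. eexists. apply is_derive_Reals, Dq.
  - set (U := (Y1 + s * e1) * cos b + (Y2 + s * e2) * sin b) in *.
    set (V := - (Y1 + s * e1) * sin b + (Y2 + s * e2) * cos b) in *.
    rewrite (is_derive_unique (fun x => q x) _ (q1 (b + atan (V * / U)))).
    2: apply is_derive_Reals, Dq.
    assert (HU : U <> 0) by lra.
    assert (HUV : U ^ 2 + V ^ 2 <> 0) by nra.
    assert (HUV' : U * U + V * V <> 0) by nra.
    unfold Rdiv. field. repeat split; auto.
Qed.

Lemma dGG1 s : 0 < uu s -> derivable_pt_lim GG1 s (Derive GG1 s).
Proof.
  intros Hu. apply is_derive_Reals, Derive_correct. unfold GG1, Th, Thd.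
  unfold uu, vv, du, dv in *.
  assert (HU0 : (Y1 + s * e1) * cos b + (Y2 + s * e2) * sin b <> 0) by lra.
  assert (HU1 : ((Y1 + s * e1) * cos b + (Y2 + s * e2) * sin b) ^ 2 +
     (- (Y1 + s * e1) * sin b + (Y2 + s * e2) * cos b) ^ 2 <> 0).
  { apply Rgt_not_eq, Rlt_gt; apply Rplus_lt_le_0_compat; [apply pow_lt; lra | apply pow2_ge_0]. }
  auto_derive.
  repeat split; auto.
  - eexists; apply is_derive_Reals, Dq.
  - eexists; apply is_derive_Reals, Dq1.
Qed.

Lemma uu_lin s : uu s = uu 0 + s * (uu 1 - uu 0).
Proof. unfold uu. ring. Qed.

Lemma hess_at s : 0 < uu s -> (e1 <> 0 \/ e2 <> 0) ->
  (exists d, 0 < d /\ forall sg, Rabs sg < d -> 0 < uu (s + sg)) ->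
  T ^ 2 * Rabs (Derive GG1 s) < PI ^ 2 * (e1 ^ 2 + e2 ^ 2).
Proof.
  intros Hu He [d [Hd Hdu]].
  pose proof (polar b (Y1 + s * e1) (Y2 + s * e2) Hu) as [P1 P2].
  set (r := sqrt ((Y1 + s * e1) ^ 2 + (Y2 + s * e2) ^ 2)) in *.
  set (x := b + atan ((- (Y1 + s * e1) * sin b + (Y2 + s * e2) * cos b) /
                      ((Y1 + s * e1) * cos b + (Y2 + s * e2) * sin b))) in *.
  assert (Hr : 0 < r).
  { unfold r; apply sqrt_lt_R0. unfold uu in Hu.
    destruct (Req_dec (Y1 + s * e1) 0) as [E|E]; [rewrite E in *|]; [|nra].
    destruct (Req_dec (Y2 + s * e2) 0) as [E'|E']; [rewrite E' in *; lra|nra]. }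
  apply (HB x r e1 e2 _ Hr He).
  unfold hess_form.
  set (M := Rabs e1 + Rabs e2 + 1).
  assert (HM : 0 < M) by (unfold M; pose proof (Rabs_pos e1); pose proof (Rabs_pos e2); lra).
  exists (fun sg => GG1 (s + sg)), (Rmin d (r / M)).
  split; [apply Rmin_pos; [lra| apply Rdiv_lt_0_compat; lra]|split].
  - intros sg0 Hsg0. apply is_derive_Reals.
    apply (is_derive_ext_loc (fun sg => gg (s + sg))).
    + eapply filter_imp; [|apply (locally_abs sg0 _ Hsg0)].
      intros sg Hsg. simpl.
      assert (Hsgd : Rabs sg < d) by (pose proof (Rmin_l d (r / M)); lra).
      assert (Hsgr : Rabs sg < r / M) by (pose proof (Rmin_r d (r / M)); lra).
      unfold gg. rewrite <- P1, <- P2.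
      replace (Y1 + s * e1 + sg * e1) with (Y1 + (s + sg) * e1) by ring.
      replace (Y2 + s * e2 + sg * e2) with (Y2 + (s + sg) * e2) by ring.
      symmetry. apply Psi_loc_indep; auto.
      * replace (Y1 + (s + sg) * e1) with (r * cos x + sg * e1) by (rewrite <- P1; ring).
        replace (Y2 + (s + sg) * e2) with (r * sin x + sg * e2) by (rewrite <- P2; ring).
        assert (Hc := sin2_cos2 x). unfold Rsqr in Hc.
        assert (Hb : Rabs (e1 * cos x + e2 * sin x) <= Rabs e1 + Rabs e2).
        { eapply Rle_trans; [apply Rabs_triang|]. rewrite !Rabs_mult.
          pose proof (Rabs_pos e1); pose proof (Rabs_pos e2).
          assert (Rabs (cos x) <= 1) by (apply Rabs_le; apply COS_bound).
          assert (Rabs (sin x) <= 1) by (apply Rabs_le; apply SIN_bound).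
          nra. }
        assert (Hm : Rabs sg * M < r).
        { apply (Rmult_lt_compat_r M) in Hsgr; [|lra].
          unfold Rdiv in Hsgr; rewrite Rmult_assoc, Rinv_l in Hsgr; lra. }
        assert (Hx : Rabs (sg * (e1 * cos x + e2 * sin x)) < r).
        { rewrite Rabs_mult. pose proof (Rabs_pos sg). unfold M in Hm. nra. }
        apply Rabs_def2 in Hx.
        replace ((r * cos x + sg * e1) * cos x + (r * sin x + sg * e2) * sin x)
          with (r * (sin x * sin x + cos x * cos x) + sg * (e1 * cos x + e2 * sin x)) by ring.
        rewrite Hc. lra.
      * apply (Hdu sg Hsgd).
    + apply is_derive_Reals.
      assert (Hsgd : Rabs sg0 < d) by (pose proof (Rmin_l d (r / M)); lra).
      apply (dshift gg s sg0), dgg, Hdu, Hsgd.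
  - apply dshift. rewrite Rplus_0_r. apply dGG1, Hu.
Qed.

Lemma gen_bound : (e1 <> 0 \/ e2 <> 0) -> 0 < uu 0 -> 0 < uu 1 ->
  gg 1 - gg 0 - GG1 0 < PI ^ 2 / (2 * T ^ 2) * (e1 ^ 2 + e2 ^ 2).
Proof.
  intros He H0 H1.
  set (u0 := uu 0) in *. set (u1 := uu 1) in *.
  set (m := Rmin u0 u1).
  assert (Hm : 0 < m) by (apply Rmin_pos; lra).
  assert (Hm0 : m <= u0) by apply Rmin_l.
  assert (Hm1 : m <= u1) by apply Rmin_r.
  set (d0 := m / (Rabs (u1 - u0) + 1)).
  assert (Hd0 : 0 < d0) by (unfold d0; apply Rdiv_lt_0_compat; [lra|pose proof (Rabs_pos (u1-u0)); lra]).
  assert (Hd0a : d0 * Rabs (u1 - u0) < m).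
  { unfold d0. pose proof (Rabs_pos (u1-u0)).
    apply (Rmult_lt_reg_r (Rabs (u1 - u0) + 1)); [lra|].
    field_simplify; [|lra]. nra. }
  assert (Hpos : forall s, - d0 < s < 1 + d0 -> 0 < uu s).
  { intros s Hs. rewrite uu_lin. fold u0 u1.
    destruct (Rle_dec 0 s); destruct (Rle_dec s 1).
    - nra.
    - assert (Rabs (u1 - u0) * (s - 1) < m).
      { assert (s - 1 < d0) by lra. pose proof (Rabs_pos (u1 - u0)). nra. }
      pose proof (Rle_abs (u1 - u0)). pose proof (Rle_abs (-(u1 - u0))). rewrite Rabs_Ropp in *. nra.
    - assert (Rabs (u1 - u0) * (- s) < m).
      { assert (- s < d0) by lra. pose proof (Rabs_pos (u1 - u0)). nra. }
      pose proof (Rle_abs (u1 - u0)). pose proof (Rle_abs (-(u1 - u0))). rewrite Rabs_Ropp in *. nra.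
    - lra. }
  set (K := PI ^ 2 * (e1 ^ 2 + e2 ^ 2) / T ^ 2).
  replace (PI ^ 2 / (2 * T ^ 2) * (e1 ^ 2 + e2 ^ 2)) with (K / 2) by (unfold K; field; lra).
  apply (taylor2 gg GG1 (Derive GG1) K d0 Hd0).
  - intros s Hs. apply dgg, Hpos, Hs.
  - intros s Hs. apply dGG1, Hpos. lra.
  - intros s Hs.
    assert (Hh := hess_at s (Hpos s ltac:(lra)) He).
    assert (Hh' : T ^ 2 * Rabs (Derive GG1 s) < PI ^ 2 * (e1 ^ 2 + e2 ^ 2)).
    { apply Hh. exists d0. split; [lra|]. intros sg Hsg. apply Hpos.
      apply Rabs_def2 in Hsg. lra. }
    pose proof (Rle_abs (Derive GG1 s)).
    assert (HT2 : 0 < T ^ 2) by (apply pow_lt; lra).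
    unfold K. apply (Rmult_lt_reg_l (T ^ 2)); [lra|].
    field_simplify; [|lra]. nra.
Qed.
End Gen.

Lemma Rbound (lam lam0 ph ph0 : R) : 0 < lam -> 0 < lam0 ->
  (lam0 * cos ph0 - lam * cos ph <> 0 \/ lam0 * sin ph0 - lam * sin ph <> 0) ->
  / 2 * lam0 ^ 2 * q ph0 - / 2 * lam ^ 2 * q ph
   - ((lam * cos ph * (lam0 * cos ph0 - lam * cos ph) + lam * sin ph * (lam0 * sin ph0 - lam * sin ph)) * q ph
      + / 2 * (lam * cos ph * (lam0 * sin ph0 - lam * sin ph) - lam * sin ph * (lam0 * cos ph0 - lam * cos ph)) * q1 ph)
   < PI ^ 2 / (2 * T ^ 2) * ((lam0 * cos ph0 - lam * cos ph) ^ 2 + (lam0 * sin ph0 - lam * sin ph) ^ 2).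
Proof.
  intros Hl Hl0 He.
  assert (HPI := PI_RGT_0).
  set (k := up ((ph0 - ph - PI) / (2 * PI))).
  destruct (archimed ((ph0 - ph - PI) / (2 * PI))) as [Hk1 Hk2]. fold k in Hk1, Hk2.
  set (th := ph0 - ph - 2 * IZR k * PI).
  assert (Hth1 : th < PI).
  { unfold th. apply Rgt_lt in Hk1.
    apply (Rmult_lt_compat_r (2 * PI)) in Hk1; [|lra].
    unfold Rdiv in Hk1. rewrite Rmult_assoc, Rinv_l in Hk1; lra. }
  assert (Hth2 : - PI <= th).
  { unfold th.
    assert (IZR k <= (ph0 - ph - PI) / (2 * PI) + 1) by lra.
    apply (Rmult_le_compat_r (2 * PI)) in H; [|lra].
    rewrite Rmult_plus_distr_r in H. unfold Rdiv in H. rewrite Rmult_assoc, Rinv_l in H; lra. }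
  assert (Eph0 : ph0 = (ph + th) + 2 * IZR k * PI) by (unfold th; ring).
  assert (Ec : cos ph0 = cos (ph + th)) by (rewrite Eph0; apply (per_Z cos cos_2PI_per)).
  assert (Es : sin ph0 = sin (ph + th)) by (rewrite Eph0; apply (per_Z sin sin_2PI_per)).
  assert (Hc := sin2_cos2 ph). unfold Rsqr in Hc.
  assert (HT2 : 0 < T ^ 2) by (apply pow_lt; lra).
  destruct (Req_dec th (- PI)) as [Hpi|Hpi].
  - (* segment through the origin *)
    rewrite Hpi in Ec, Es.
    replace (ph + - PI) with (ph - PI) in Ec, Es by ring.
    rewrite cos_minus, cos_PI, sin_PI in Ec. rewrite sin_minus, cos_PI, sin_PI in Es.
    assert (Q0 : q ph0 < PI ^ 2 / T ^ 2).
    { pose proof (radial ph0). pose proof (Rle_abs (q ph0)).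
      apply (Rmult_lt_reg_l (T ^ 2)); [lra|]. field_simplify; [|lra]. nra. }
    assert (Q : q ph < PI ^ 2 / T ^ 2).
    { pose proof (radial ph). pose proof (Rle_abs (q ph)).
      apply (Rmult_lt_reg_l (T ^ 2)); [lra|]. field_simplify; [|lra]. nra. }
    set (A := PI ^ 2 / T ^ 2) in *.
    replace (PI ^ 2 / (2 * T ^ 2)) with (A / 2) by (unfold A; field; lra).
    rewrite Ec, Es.
    replace (lam * cos ph * (lam0 * (cos ph * -1 + sin ph * 0) - lam * cos ph) +
      lam * sin ph * (lam0 * (sin ph * -1 - cos ph * 0) - lam * sin ph))
      with (- (lam * (lam0 + lam)) * (sin ph * sin ph + cos ph * cos ph)) by ring.
    replace (lam * cos ph * (lam0 * (sin ph * -1 - cos ph * 0) - lam * sin ph) -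
      lam * sin ph * (lam0 * (cos ph * -1 + sin ph * 0) - lam * cos ph)) with 0 by ring.
    replace ((lam0 * (cos ph * -1 + sin ph * 0) - lam * cos ph) ^ 2 +
      (lam0 * (sin ph * -1 - cos ph * 0) - lam * sin ph) ^ 2)
      with ((lam0 + lam) ^ 2 * (sin ph * sin ph + cos ph * cos ph)) by ring.
    rewrite Hc.
    assert (0 < lam0 ^ 2 * (A - q ph0)) by (apply Rmult_lt_0_compat; [apply pow_lt|]; lra).
    assert (0 < (lam ^ 2 + 2 * lam * lam0) * (A - q ph)) by (apply Rmult_lt_0_compat; nra).
    nra.
  -
    set (b := ph + th / 2).
    set (Y1 := lam * cos ph). set (Y2 := lam * sin ph).
    set (e1 := lam0 * cos ph0 - lam * cos ph). set (e2 := lam0 * sin ph0 - lam * sin ph).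
    assert (Hcb : 0 < cos (th / 2)) by (apply cos_gt_0; lra).
    assert (U0 : uu b Y1 Y2 e1 e2 0 = lam * cos (th / 2)).
    { unfold uu, Y1, Y2. replace (th / 2) with (- (ph - b)) by (unfold b; field).
      rewrite cos_neg, cos_minus. ring. }
    assert (U1 : uu b Y1 Y2 e1 e2 1 = lam0 * cos (th / 2)).
    { unfold uu, Y1, Y2, e1, e2. rewrite Ec, Es.
      replace (th / 2) with (ph + th - b) by (unfold b; field).
      rewrite cos_minus. ring. }
    pose proof (gen_bound b Y1 Y2 e1 e2 He) as G.
    rewrite U0, U1 in G. specialize (G ltac:(nra) ltac:(nra)).
    assert (G0 : gg b Y1 Y2 e1 e2 0 = / 2 * lam ^ 2 * q ph).
    { unfold gg. rewrite !Rmult_0_l, !Rplus_0_r.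
      rewrite <- (Psi_loc_indep q Hq ph b).
      - apply Psi_loc_polar.
      - unfold Y1, Y2. nra.
      - pose proof (U0) as U0'. unfold uu in U0'. rewrite !Rmult_0_l, !Rplus_0_r in U0'. nra. }
    assert (G1 : gg b Y1 Y2 e1 e2 1 = / 2 * lam0 ^ 2 * q ph0).
    { unfold gg. rewrite !Rmult_1_l.
      replace (Y1 + e1) with (lam0 * cos ph0) by (unfold Y1, e1; ring).
      replace (Y2 + e2) with (lam0 * sin ph0) by (unfold Y2, e2; ring).
      assert (Hc0 := sin2_cos2 ph0). unfold Rsqr in Hc0.
      rewrite <- (Psi_loc_indep q Hq ph0 b).
      - apply Psi_loc_polar.
      - nra.
      - pose proof (U1) as U1'. unfold uu in U1'. rewrite !Rmult_1_l in U1'.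
        replace (Y1 + e1) with (lam0 * cos ph0) in U1' by (unfold Y1, e1; ring).
        replace (Y2 + e2) with (lam0 * sin ph0) in U1' by (unfold Y2, e2; ring). nra. }
    assert (GD : GG1 b Y1 Y2 e1 e2 0 =
      (Y1 * e1 + Y2 * e2) * q ph + / 2 * (Y1 * e2 - Y2 * e1) * q1 ph).
    { unfold GG1. rewrite !Rmult_0_l, !Rplus_0_r.
      assert (Hu0 : 0 < Y1 * cos b + Y2 * sin b).
      { pose proof (U0) as U0'. unfold uu in U0'. rewrite !Rmult_0_l, !Rplus_0_r in U0'. nra. }
      destruct (angle_rel ph b Y1 Y2 ltac:(unfold Y1, Y2; nra) Hu0) as [kk Hkk].
      replace (- Y1 * sin ph + Y2 * cos ph) with 0 in Hkk by (unfold Y1, Y2; ring).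
      unfold Rdiv in Hkk. rewrite Rmult_0_l, atan_0, Rplus_0_r in Hkk.
      assert (ETh : Th b Y1 Y2 e1 e2 0 = ph + 2 * IZR (- kk) * PI).
      { unfold Th, uu, vv. rewrite !Rmult_0_l, !Rplus_0_r. rewrite opp_IZR. unfold Rdiv. lra. }
      rewrite ETh, (per_Z q Hq), (per_Z q1 Hq1).
      unfold Thd, uu, vv, du, dv. rewrite !Rmult_0_l, !Rplus_0_r.
      assert (Hcb2 := sin2_cos2 b). unfold Rsqr in Hcb2.
      assert (HY : (Y1 * cos b + Y2 * sin b) ^ 2 + (- Y1 * sin b + Y2 * cos b) ^ 2 = lam ^ 2).
      { replace ((Y1 * cos b + Y2 * sin b) ^ 2 + (- Y1 * sin b + Y2 * cos b) ^ 2)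
          with ((Y1 ^ 2 + Y2 ^ 2) * (sin b * sin b + cos b * cos b)) by ring.
        rewrite Hcb2. unfold Y1, Y2.
        replace ((lam * cos ph) ^ 2 + (lam * sin ph) ^ 2) with (lam ^ 2 * (sin ph * sin ph + cos ph * cos ph)) by ring.
        rewrite Hc. ring. }
      rewrite HY.
      replace ((- e1 * sin b + e2 * cos b) * (Y1 * cos b + Y2 * sin b) -
         (- Y1 * sin b + Y2 * cos b) * (e1 * cos b + e2 * sin b))
        with ((Y1 * e2 - Y2 * e1) * (sin b * sin b + cos b * cos b)) by ring.
      rewrite Hcb2.
      replace (Y1 ^ 2 + Y2 ^ 2) with (lam ^ 2).
      2:{ unfold Y1, Y2. replace ((lam * cos ph) ^ 2 + (lam * sin ph) ^ 2) with (lam ^ 2 * (sin ph * sin ph + cos ph * cos ph)) by ring.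
        rewrite Hc. ring. }
      field. lra. }
    rewrite G0, G1, GD in G. unfold Y1, Y2, e1, e2 in G. exact G.
Qed.
End RB.


Lemma pd_t_unique f g1 g2 : pd_t f g1 -> pd_t f g2 -> g1 = g2.
Proof.
  intros H1 H2. apply functional_extensionality; intro t.
  apply functional_extensionality; intro x. eapply uniqueness_limite; eauto.
Qed.
Lemma pd_x_unique f g1 g2 : pd_x f g1 -> pd_x f g2 -> g1 = g2.
Proof.
  intros H1 H2. apply functional_extensionality; intro t.
  apply functional_extensionality; intro x. eapply uniqueness_limite; eauto.
Qed.
Lemma smooth2_cont f : smooth2 f -> cont2 f.
Proof. intros []; auto. Qed.
Lemma smooth2_t f g : smooth2 f -> pd_t f g -> smooth2 g.
Proof. intros [ft fx _ H1 _ H3 _] H. rewrite (pd_t_unique _ _ _ H H1); auto. Qed.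
Lemma smooth2_x f g : smooth2 f -> pd_x f g -> smooth2 g.
Proof. intros [ft fx _ _ H2 _ H4] H. rewrite (pd_x_unique _ _ _ H H2); auto. Qed.
Lemma smooth2_ex_t f : smooth2 f -> exists g, pd_t f g /\ smooth2 g.
Proof. intros [ft fx _ H1 _ H3 _]. eauto. Qed.
Lemma smooth2_ex_x f : smooth2 f -> exists g, pd_x f g /\ smooth2 g.
Proof. intros [ft fx _ _ H2 _ H4]. eauto. Qed.

Lemma cont2_c2d f : cont2 f -> forall t x, continuity_2d_pt f t x.
Proof.
  intros H t x eps. destruct (H t x eps (cond_pos eps)) as [d [Hd Hd2]].
  exists (mkposreal d Hd). intros u v Hu Hv. apply Hd2; auto.
Qed.

Lemma c2d_comp2 (p g : R -> R -> R) t x :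
  (forall a b, continuity_2d_pt p a b) -> continuity_2d_pt g t x ->
  continuity_2d_pt (fun u v => p u (g u v)) t x.
Proof.
  intros Hp Hg eps.
  destruct (Hp t (g t x) eps) as [d1 Hd1].
  destruct (Hg d1) as [d2 Hd2].
  exists (mkposreal _ (Rmin_pos _ _ (cond_pos d1) (cond_pos d2))). simpl.
  intros u v Hu Hv. apply Hd1.
  - pose proof (Rmin_l d1 d2). lra.
  - apply Hd2; pose proof (Rmin_r d1 d2); lra.
Qed.

Lemma c2d_locpos f t x : continuity_2d_pt f t x -> 0 < f t x ->
  locally_2d (fun u v => 0 < f u v) t x.
Proof.
  intros H Hp. destruct (H (mkposreal _ Hp)) as [d Hd].
  exists d. intros u v Hu Hv. specialize (Hd u v Hu Hv). simpl in Hd.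
  apply Rabs_def2 in Hd. lra.
Qed.

Lemma c2d_cont_x f t x : continuity_2d_pt f t x -> continuous (fun v => f t v) x.
Proof.
  intros H. apply continuity_pt_filterlim.
  intros eps Heps. destruct (H (mkposreal _ Heps)) as [d Hd].
  exists d. split; [apply cond_pos|]. intros v [_ Hv].
  apply (Hd t v); simpl; [rewrite Rminus_eq_0, Rabs_R0; apply cond_pos|]. exact Hv.
Qed.

Lemma c2d_cont_t f t x : continuity_2d_pt f t x -> continuous (fun u => f u x) t.
Proof.
  intros H. apply continuity_pt_filterlim.
  intros eps Heps. destruct (H (mkposreal _ Heps)) as [d Hd].
  exists d. split; [apply cond_pos|]. intros v [_ Hv].
  apply (Hd v x); simpl; [exact Hv|rewrite Rminus_eq_0, Rabs_R0; apply cond_pos].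
Qed.

Lemma param_cont (f : R -> R -> R) (a b t r : R) : a <= b -> 0 < r ->
  (forall u x, t - r <= u <= t + r -> a <= x <= b -> continuity_2d_pt f u x) ->
  continuous (fun u => RInt (fun x => f u x) a b) t.
Proof.
  intros Hab Hr Hc. apply continuity_pt_filterlim.
  intros eps Heps.
  assert (Hba : 0 < b - a + 1) by lra.
  set (e := mkposreal (eps / (b - a + 1)) (Rdiv_lt_0_compat _ _ Heps Hba)).
  destruct (uniform_continuity_2d f (t - r) (t + r) a b) with (eps := e) as [d Hd].
  { intros; apply Hc; auto. }
  exists (Rmin d r). split; [apply Rmin_pos; [apply cond_pos|lra]|].
  intros u [_ Hu]. change (dist R_met u t) with (Rabs (u - t)) in Hu.
  pose proof (Rmin_l d r). pose proof (Rmin_r d r).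
  assert (Hex : forall w, t - r <= w <= t + r -> ex_RInt (fun x => f w x) a b).
  { intros w Hw. apply (@ex_RInt_continuous R_CompleteNormedModule). intros z Hz.
    rewrite Rmin_left, Rmax_right in Hz by lra. apply c2d_cont_x, Hc; auto. }
  assert (Hut : t - r <= u <= t + r) by (apply Rabs_def2 in Hu; lra).
  change (dist R_met (RInt (fun x : R => f u x) a b) (RInt (fun x : R => f t x) a b)) with
    (Rabs (minus (RInt (fun x : R => f u x) a b) (RInt (fun x : R => f t x) a b))).
  rewrite <- RInt_minus; [|apply Hex; auto|apply Hex; lra].
  eapply Rle_lt_trans.
  apply (abs_RInt_le_const _ a b (eps / (b - a + 1))); auto.
  - apply ex_RInt_minus; [apply Hex; auto|apply Hex; lra].
  - intros x Hx. apply Rlt_le. unfold minus, plus, opp; simpl.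
    apply (Hd t x u x); try lra; auto.
    rewrite Rminus_eq_0, Rabs_R0. apply cond_pos.
  - apply (Rmult_lt_reg_r (b - a + 1)); [lra|]. field_simplify; [|lra]. nra.
Qed.

Lemma exRc (f : R -> R) a b : (forall z, Rmin a b <= z <= Rmax a b -> continuous f z) -> ex_RInt f a b.
Proof. intros H. apply (@ex_RInt_continuous R_CompleteNormedModule). exact H. Qed.

Lemma int_zero (f : R -> R) a b : a < b ->
  (forall x, a <= x <= b -> continuous f x) ->
  (forall x, a <= x <= b -> 0 <= f x) -> RInt f a b <= 0 ->
  forall x, a <= x <= b -> f x = 0.
Proof.
  intros Hab Hc Hp Hi x0 Hx0.
  destruct (Rle_lt_or_eq_dec 0 (f x0) (Hp x0 Hx0)) as [Hpos|]; [|auto].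
  exfalso.
  pose proof (Hc x0 Hx0) as Hcx. apply continuity_pt_filterlim in Hcx.
  destruct (Hcx (f x0 / 2) ltac:(lra)) as [d [Hd Hdd]].
  set (c := Rmax a (x0 - d / 2)). set (e := Rmin b (x0 + d / 2)).
  assert (Hc1 : a <= c) by apply Rmax_l. assert (He1 : e <= b) by apply Rmin_l.
  assert (Hce : c < e).
  { unfold c, e. unfold Rmax, Rmin. destruct Rle_dec; destruct Rle_dec; lra. }
  assert (Hin : forall y, c <= y <= e -> Rabs (y - x0) < d).
  { intros y Hy. unfold c, e in Hy. pose proof (Rmax_r a (x0 - d/2)). pose proof (Rmin_r b (x0 + d/2)).
    apply Rabs_def1; lra. }
  assert (Hex : forall u v, a <= u -> u <= v -> v <= b -> ex_RInt f u v).
  { intros u v H1 H2 H3. apply exRc. intros z Hz. rewrite Rmin_left, Rmax_right in Hz by lra.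
    apply Hc; lra. }
  assert (I1 : 0 <= RInt f a c) by (apply RInt_ge_0; auto; [apply Hex; lra| intros; apply Hp; lra]).
  assert (I3 : 0 <= RInt f e b) by (apply RInt_ge_0; auto; [apply Hex; lra| intros; apply Hp; lra]).
  assert (I2 : 0 < RInt f c e).
  { apply RInt_gt_0; auto.
    - intros y Hy. assert (Hy' := Hin y ltac:(lra)).
      destruct (Req_dec y x0) as [->|Hne]; [lra|].
      specialize (Hdd y). assert (Hdy : dist R_met y x0 < d) by (simpl; unfold R_dist; auto).
      assert (Dx : D_x no_cond x0 y) by (split; [exact I|auto]).
      specialize (Hdd (conj Dx Hdy)). simpl in Hdd; unfold R_dist in Hdd. apply Rabs_def2 in Hdd. lra.
    - intros y Hy. apply Hc; lra. }
  rewrite <- (RInt_Chasles f a c b) in Hi; [|apply Hex; lra|apply Hex; lra].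
  rewrite <- (RInt_Chasles f c e b) in Hi; [|apply Hex; lra|apply Hex; lra].
  unfold plus in Hi; simpl in Hi. lra.
Qed.

Lemma deriv_agree (f g : R -> R) a b x l1 l2 : a < b -> a <= x <= b ->
  (forall y, a <= y <= b -> f y = g y) ->
  derivable_pt_lim f x l1 -> derivable_pt_lim g x l2 -> l1 = l2.
Proof.
  intros Hab Hx Heq H1 H2.
  assert (H := derivable_pt_lim_minus f g x l1 l2 H1 H2).
  destruct (Req_dec (l1 - l2) 0) as [E|E]; [lra|exfalso].
  assert (Hp : 0 < Rabs (l1 - l2) / 2) by (apply Rabs_pos_lt in E; lra).
  destruct (H _ Hp) as [d Hd].
  set (hh := if Rlt_dec x b then Rmin (d / 2) (b - x) else - Rmin (d / 2) (x - a)).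
  assert (Hd2 : 0 < d / 2) by (pose proof (cond_pos d); lra).
  assert (Hh : hh <> 0 /\ Rabs hh < d /\ a <= x + hh <= b).
  { unfold hh. destruct (Rlt_dec x b).
    - pose proof (Rmin_l (d/2) (b - x)). pose proof (Rmin_r (d/2) (b - x)).
      assert (0 < Rmin (d / 2) (b - x)) by (apply Rmin_pos; lra).
      rewrite Rabs_right by lra. repeat split; lra.
    - pose proof (Rmin_l (d/2) (x - a)). pose proof (Rmin_r (d/2) (x - a)).
      assert (0 < Rmin (d / 2) (x - a)) by (apply Rmin_pos; lra).
      rewrite Rabs_left by lra. repeat split; lra. }
  destruct Hh as [Hh0 [Hh1 Hh2]].
  specialize (Hd hh Hh0 Hh1). unfold minus_fct in Hd.
  rewrite (Heq (x + hh) Hh2), (Heq x Hx) in Hd.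
  replace ((g (x + hh) - g (x + hh) - (g x - g x)) / hh - (l1 - l2)) with (- (l1 - l2)) in Hd
    by (field; auto).
  rewrite Rabs_Ropp in Hd. lra.
Qed.

Lemma int_valued_const (f : R -> R) a b : a <= b -> continuity f ->
  (forall s, a <= s <= b -> exists k : Z, f s = IZR k) -> f b = f a.
Proof.
  intros Hab Hc Hi.
  destruct (Hi a ltac:(lra)) as [ka Ha]. destruct (Hi b ltac:(lra)) as [kb Hb].
  destruct (Z.lt_trichotomy ka kb) as [L|[L|L]].
  - exfalso. apply IZR_lt in L.
    assert (Hab' : a < b) by (destruct (Req_dec a b); [subst; lra|lra]).
    destruct (IVT (fun s => f s - (IZR ka + / 2)) a b) as [z [Hz Hfz]]; auto.
    + apply continuity_minus; auto. apply continuity_const. intros u v; auto.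
    + rewrite Ha. lra.
    + rewrite Hb. assert (IZR ka + 1 <= IZR kb).
      { rewrite <- plus_IZR. apply IZR_le. apply lt_IZR in L. lia. } lra.
    + destruct (Hi z Hz) as [kz Hkz].
      assert (A1 : (ka < kz)%Z) by (apply lt_IZR; lra).
      assert (A2 : (kz < ka + 1)%Z) by (apply lt_IZR; rewrite plus_IZR; lra). lia.
  - subst. lra.
  - exfalso. apply IZR_lt in L.
    assert (Hab' : a < b) by (destruct (Req_dec a b); [subst; lra|lra]).
    destruct (IVT (fun s => (IZR kb + / 2) - f s) a b) as [z [Hz Hfz]]; auto.
    + apply continuity_minus; auto. apply continuity_const. intros u v; auto.
    + rewrite Ha. assert (IZR kb + 1 <= IZR ka).
      { rewrite <- plus_IZR. apply IZR_le. apply lt_IZR in L. lia. } lra.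
    + rewrite Hb. lra.
    + destruct (Hi z Hz) as [kz Hkz].
      assert (A1 : (kb < kz)%Z) by (apply lt_IZR; lra).
      assert (A2 : (kz < kb + 1)%Z) by (apply lt_IZR; rewrite plus_IZR; lra). lia.
Qed.

Lemma omega_lim (X Y D T : R) : 0 <= X -> 0 < T ->
  (forall w, 0 < w < PI / T -> / 2 * w ^ 2 * X - Y <= D) ->
  PI ^ 2 / (2 * T ^ 2) * X - Y <= D.
Proof.
  intros HX HT H.
  set (W := PI / T).
  assert (HW : 0 < W) by (unfold W; apply Rdiv_lt_0_compat; [apply PI_RGT_0|lra]).
  replace (PI ^ 2 / (2 * T ^ 2)) with (/ 2 * W ^ 2) by (unfold W; field; lra).
  destruct (Rle_dec (/ 2 * W ^ 2 * X - Y) D) as [|Hn]; [auto|exfalso].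
  set (gap := / 2 * W ^ 2 * X - Y - D).
  assert (Hg : 0 < gap) by (unfold gap; lra).
  assert (HWX : 0 <= W ^ 2 * X) by (apply Rmult_le_pos; [apply pow2_ge_0|lra]).
  set (mu := Rmin (/ 2) (gap / (W ^ 2 * X + 2))).
  assert (Hmu0 : 0 < mu) by (apply Rmin_pos; [lra|apply Rdiv_lt_0_compat; lra]).
  assert (Hmu1 : mu <= / 2) by apply Rmin_l.
  assert (Hmu2 : mu * (W ^ 2 * X + 2) <= gap).
  { pose proof (Rmin_r (/2) (gap / (W ^ 2 * X + 2))).
    apply (Rmult_le_compat_r (W ^ 2 * X + 2)) in H0; [|lra].
    unfold Rdiv in H0. rewrite Rmult_assoc, Rinv_l in H0 by lra. change (Rmin (/ 2) (gap * / (W ^ 2 * X + 2))) with mu in H0. lra. }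
  specialize (H ((1 - mu) * W)).
  assert (Hw : 0 < (1 - mu) * W < W) by (split; nra).
  specialize (H Hw).
  unfold gap in *.
  assert (E : / 2 * ((1 - mu) * W) ^ 2 * X = / 2 * W ^ 2 * X - mu * (W ^ 2 * X) + / 2 * mu ^ 2 * (W ^ 2 * X)). { field. }
  rewrite E in H. nra.
Qed.

Lemma pos_near (f : R -> R -> R) c : (forall t x, continuity_2d_pt f t x) ->
  (forall x, 0 <= x <= 2 * PI -> 0 < f c x) ->
  exists d, 0 < d /\ forall v u, c - d <= v <= c + d -> 0 <= u <= 2 * PI -> 0 < f v u.
Proof.
  intros Hc Hp. assert (HPI := PI_RGT_0).
  destruct (continuity_ab_min (f c) 0 (2 * PI)) as [mx [Hmx1 Hmx2]]; [lra| |].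
  { intros z Hz. apply continuity_pt_filterlim. apply c2d_cont_x, Hc. }
  assert (Hm : 0 < f c mx) by (apply Hp; auto).
  destruct (uniform_continuity_2d_1d' f 0 (2 * PI) c) with (eps := mkposreal _ Hm) as [d Hd].
  { intros; apply Hc. }
  exists d. split; [apply cond_pos|]. intros v u Hv Hu.
  specialize (Hd u c u v Hu ltac:(pose proof (cond_pos d); lra) Hu Hv).
  rewrite Rminus_eq_0, Rabs_R0 in Hd. specialize (Hd (cond_pos d)).
  simpl in Hd. apply Rabs_def2 in Hd. specialize (Hmx1 u Hu). lra.
Qed.

Lemma pos_nbhd (f : R -> R -> R) a b : a <= b -> (forall t x, continuity_2d_pt f t x) ->
  (forall t x, a <= t <= b -> 0 <= x <= 2 * PI -> 0 < f t x) ->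
  exists e, 0 < e /\ forall y x, a - e < y < b + e -> 0 <= x <= 2 * PI -> 0 < f y x.
Proof.
  intros Hab Hc Hp.
  destruct (pos_near f a Hc) as [da [Hda Ha]]; [intros; apply Hp; lra|].
  destruct (pos_near f b Hc) as [db [Hdb Hb]]; [intros; apply Hp; lra|].
  exists (Rmin da db). split; [apply Rmin_pos; auto|].
  intros y x Hy Hx. pose proof (Rmin_l da db). pose proof (Rmin_r da db).
  destruct (Rle_dec a y); destruct (Rle_dec y b).
  - apply Hp; auto.
  - apply Hb; auto; lra.
  - apply Ha; auto; lra.
  - lra.
Qed.

Lemma is_derive_val (f : R -> R) x l1 l2 : is_derive f x l1 -> l1 = l2 -> is_derive f x l2.
Proof. intros H ->. exact H. Qed.

Lemma RInt_per (f : R -> R) : (forall x, continuous f x) -> (forall x, f (x + 2 * PI) = f x) ->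
  forall a, RInt f a (a + 2 * PI) = RInt f 0 (2 * PI).
Proof.
  intros Hc Hp a.
  assert (Hex : forall u v, ex_RInt f u v) by (intros; apply exRc; intros; apply Hc).
  set (F := fun a => RInt f 0 (a + 2 * PI) - RInt f 0 a).
  assert (HF : forall a, RInt f a (a + 2 * PI) = F a).
  { intros b. unfold F. pose proof (RInt_Chasles f 0 b (b + 2 * PI) (Hex _ _) (Hex _ _)) as E.
    change (RInt f 0 b + RInt f b (b + 2 * PI) = RInt f 0 (b + 2 * PI)) in E. lra. }
  assert (Hd0 : forall b, is_derive (RInt f 0) b (f b)).
  { intros b. apply is_derive_RInt with (a := 0).
    - apply filter_forall. intros c. apply RInt_correct, Hex.
    - apply Hc. }
  assert (HD : forall b, is_derive F b 0).
  { intros b. unfold F.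
    assert (H1 : is_derive (fun a => RInt f 0 (a + 2 * PI)) b (scal 1 (f (b + 2 * PI)))).
    { apply (is_derive_comp (RInt f 0) (fun a => a + 2 * PI)).
      + apply Hd0.
      + auto_derive; auto; ring. }
    pose proof (is_derive_minus _ _ _ _ _ H1 (Hd0 b)) as H2.
    eapply is_derive_val; [eapply is_derive_ext; [|exact H2]|].
    intros t; simpl. unfold minus, plus, opp; simpl. ring.
    rewrite Hp. unfold minus, scal, plus, opp; simpl. unfold mult; simpl. ring. }
  rewrite HF. replace (RInt f 0 (2 * PI)) with (F 0).
  2:{ unfold F. rewrite Rplus_0_l, RInt_point. unfold zero; simpl. ring. }
  destruct (MVT_gen F 0 a (fun _ => 0)) as [c [_ Hc2]].
  - intros; apply HD.
  - intros; apply derivable_continuous_pt. exists 0. apply is_derive_Reals, HD.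
  - lra.
Qed.

Lemma cov (q g dg : R -> R) : (forall x, continuous q x) -> (forall x, q (x + 2 * PI) = q x) ->
  (forall x, 0 <= x <= 2 * PI -> derivable_pt_lim g x (dg x)) ->
  (forall x, 0 <= x <= 2 * PI -> continuous dg x) -> g (2 * PI) = g 0 + 2 * PI ->
  RInt (fun x => dg x * q (g x)) 0 (2 * PI) = RInt q 0 (2 * PI).
Proof.
  intros Hq Hp Hg Hdg Hper. assert (HPI := PI_RGT_0).
  rewrite <- (RInt_per q Hq Hp (g 0)), <- Hper.
  apply is_RInt_unique.
  apply (is_RInt_comp q g dg 0 (2 * PI)).
  - intros; apply Hq.
  - intros x Hx. rewrite Rmin_left, Rmax_right in Hx by lra. split.
    + apply is_derive_Reals, Hg; auto.
    + apply Hdg; auto.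
Qed.

Lemma RInt_plusR (f g : R -> R) a b : ex_RInt f a b -> ex_RInt g a b ->
  RInt (fun x => f x + g x) a b = RInt f a b + RInt g a b.
Proof. intros H1 H2. exact (RInt_plus f g a b H1 H2). Qed.
Lemma RInt_minusR (f g : R -> R) a b : ex_RInt f a b -> ex_RInt g a b ->
  RInt (fun x => f x - g x) a b = RInt f a b - RInt g a b.
Proof. intros H1 H2. exact (RInt_minus f g a b H1 H2). Qed.
Lemma RInt_scalR (f : R -> R) c a b : ex_RInt f a b ->
  RInt (fun x => c * f x) a b = c * RInt f a b.
Proof. intros H1. exact (RInt_scal f a b c H1). Qed.
Lemma ex_RInt_plusR (f g : R -> R) a b : ex_RInt f a b -> ex_RInt g a b -> ex_RInt (fun x => f x + g x) a b.
Proof. intros H1 H2. exact (ex_RInt_plus f g a b H1 H2). Qed.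
Lemma ex_RInt_minusR (f g : R -> R) a b : ex_RInt f a b -> ex_RInt g a b -> ex_RInt (fun x => f x - g x) a b.
Proof. intros H1 H2. exact (ex_RInt_minus f g a b H1 H2). Qed.
Lemma ex_RInt_scalR (f : R -> R) c a b : ex_RInt f a b -> ex_RInt (fun x => c * f x) a b.
Proof. intros H1. exact (ex_RInt_scal f a b c H1). Qed.

Lemma is_RInt_plusR (f g : R -> R) a b lf lg : is_RInt f a b lf -> is_RInt g a b lg ->
  is_RInt (fun x => f x + g x) a b (lf + lg).
Proof. intros H1 H2. exact (is_RInt_plus f g a b lf lg H1 H2). Qed.
Lemma is_RInt_minusR (f g : R -> R) a b lf lg : is_RInt f a b lf -> is_RInt g a b lg ->
  is_RInt (fun x => f x - g x) a b (lf - lg).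
Proof. intros H1 H2. exact (is_RInt_minus f g a b lf lg H1 H2). Qed.
Lemma is_RInt_scalR (f : R -> R) c a b lf : is_RInt f a b lf ->
  is_RInt (fun x => c * f x) a b (c * lf).
Proof. intros H1. exact (is_RInt_scal f a b c lf H1). Qed.

Lemma RInt_of_Riemann (f : R -> R) a b v : (exists pr : Riemann_integrable f a b, RiemannInt pr = v) ->
  is_RInt f a b v.
Proof.
  intros [pr Hpr].
  assert (E : RInt f a b = v) by (rewrite <- Hpr; apply RInt_Reals).
  rewrite <- E. exact (@RInt_correct R_CompleteNormedModule f a b (ex_RInt_Reals_1 f a b pr)).
Qed.


Definition Gexp (l lt f ft l0 f0 a : R) : R :=
  let Y1 := l * cos f in let Y2 := l * sin f in
  let V1 := lt * cos f - l * ft * sin f in let V2 := lt * sin f + l * ft * cos f in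
  let E1 := l0 * cos f0 - Y1 in let E2 := l0 * sin f0 - Y2 in
  V1 * E1 + V2 * E2 + / 2 * a * (E1 ^ 2 + E2 ^ 2).

Definition Gtexp (l lt ltt f ft ftt l0 l0t f0 f0t a adt : R) : R :=
  let Y1 := l * cos f in let Y2 := l * sin f in
  let V1 := lt * cos f - l * ft * sin f in let V2 := lt * sin f + l * ft * cos f in
  let A1 := ltt * cos f - 2 * lt * ft * sin f - l * ftt * sin f - l * ft ^ 2 * cos f in
  let A2 := ltt * sin f + 2 * lt * ft * cos f + l * ftt * cos f - l * ft ^ 2 * sin f in
  let E1 := l0 * cos f0 - Y1 in let E2 := l0 * sin f0 - Y2 in
  let U1 := l0t * cos f0 - l0 * f0t * sin f0 in let U2 := l0t * sin f0 + l0 * f0t * cos f0 in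
  A1 * E1 + A2 * E2 + V1 * (U1 - V1) + V2 * (U2 - V2) + / 2 * adt * (E1 ^ 2 + E2 ^ 2)
   + a * (E1 * (U1 - V1) + E2 * (U2 - V2)).

Definition AEexp (l lt ltt f ft ftt l0 f0 : R) : R :=
  let A1 := ltt * cos f - 2 * lt * ft * sin f - l * ftt * sin f - l * ft ^ 2 * cos f in
  let A2 := ltt * sin f + 2 * lt * ft * cos f + l * ftt * cos f - l * ft ^ 2 * sin f in
  let E1 := l0 * cos f0 - l * cos f in let E2 := l0 * sin f0 - l * sin f in
  A1 * E1 + A2 * E2.

Definition Wexp (l lt f ft l0 l0t f0 f0t a : R) : R :=
  let V1 := lt * cos f - l * ft * sin f in let V2 := lt * sin f + l * ft * cos f in
  let E1 := l0 * cos f0 - l * cos f in let E2 := l0 * sin f0 - l * sin f in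
  let U1 := l0t * cos f0 - l0 * f0t * sin f0 in let U2 := l0t * sin f0 + l0 * f0t * cos f0 in
  / 2 * ((U1 - V1 - a * E1) ^ 2 + (U2 - V2 - a * E2) ^ 2).

Definition Hexp (l f l0 f0 : R) : R := (l0 * cos f0 - l * cos f) ^ 2 + (l0 * sin f0 - l * sin f) ^ 2.

Lemma ident_val (l lt ltt f ft ftt l0 l0t f0 f0t a w : R) :
  / 2 * ((l0 ^ 2 * f0t ^ 2 + l0t ^ 2) - (l ^ 2 * ft ^ 2 + lt ^ 2)) =
  Gtexp l lt ltt f ft ftt l0 l0t f0 f0t a (- w ^ 2 - a ^ 2) + Wexp l lt f ft l0 l0t f0 f0t a
  + / 2 * w ^ 2 * Hexp l f l0 f0 - AEexp l lt ltt f ft ftt l0 f0.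
Proof.
  unfold Gtexp, Wexp, Hexp, AEexp.
  assert (H1 := sin2_cos2 f). assert (H2 := sin2_cos2 f0). unfold Rsqr in *.
  replace (l0 ^ 2 * f0t ^ 2 + l0t ^ 2) with ((l0 ^ 2 * f0t ^ 2 + l0t ^ 2) * (sin f0 * sin f0 + cos f0 * cos f0))
    by (rewrite H2; ring).
  replace (l ^ 2 * ft ^ 2 + lt ^ 2) with ((l ^ 2 * ft ^ 2 + lt ^ 2) * (sin f * sin f + cos f * cos f))
    by (rewrite H1; ring).
  field.
Qed.

Lemma AE_heq (l lt ltt f ft ftt l0 f0 Q Q1 : R) : 0 < l ->
  ltt - l * ft ^ 2 = - l * Q -> ftt + 2 * (lt / l) * ft = - / 2 * Q1 ->
  AEexp l lt ltt f ft ftt l0 f0 =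
  - ((l * cos f * (l0 * cos f0 - l * cos f) + l * sin f * (l0 * sin f0 - l * sin f)) * Q
      + / 2 * (l * cos f * (l0 * sin f0 - l * sin f) - l * sin f * (l0 * cos f0 - l * cos f)) * Q1).
Proof.
  intros Hl H1 H2. unfold AEexp.
  replace ltt with (l * ft ^ 2 - l * Q) by lra.
  replace ftt with (- / 2 * Q1 - 2 * (lt / l) * ft) by lra.
  field. lra.
Qed.

Lemma dGexp (l lt ltt f ft ftt l0 l0t f0 f0t a adt : R -> R) u :
  derivable_pt_lim l u (lt u) -> derivable_pt_lim lt u (ltt u) ->
  derivable_pt_lim f u (ft u) -> derivable_pt_lim ft u (ftt u) ->
  derivable_pt_lim l0 u (l0t u) -> derivable_pt_lim f0 u (f0t u) ->
  derivable_pt_lim a u (adt u) ->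
  derivable_pt_lim (fun s => Gexp (l s) (lt s) (f s) (ft s) (l0 s) (f0 s) (a s)) u
    (Gtexp (l u) (lt u) (ltt u) (f u) (ft u) (ftt u) (l0 u) (l0t u) (f0 u) (f0t u) (a u) (adt u)).
Proof.
  intros D1 D2 D3 D4 D5 D6 D7.
  apply is_derive_Reals in D1, D2, D3, D4, D5, D6, D7.
  apply is_derive_Reals. unfold Gexp, Gtexp.
  auto_derive.
  - repeat split; eexists; eauto.
  - assert (F1 : Derive (fun x => l x) u = lt u) by (apply is_derive_unique; exact D1).
    assert (F2 : Derive (fun x => lt x) u = ltt u) by (apply is_derive_unique; exact D2).
    assert (F3 : Derive (fun x => f x) u = ft u) by (apply is_derive_unique; exact D3).
    assert (F4 : Derive (fun x => ft x) u = ftt u) by (apply is_derive_unique; exact D4).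
    assert (F5 : Derive (fun x => l0 x) u = l0t u) by (apply is_derive_unique; exact D5).
    assert (F6 : Derive (fun x => f0 x) u = f0t u) by (apply is_derive_unique; exact D6).
    assert (F7 : Derive (fun x => a x) u = adt u) by (apply is_derive_unique; exact D7).
    rewrite ?F1, ?F2, ?F3, ?F4, ?F5, ?F6, ?F7.
    field.
Qed.

Ltac c2d := repeat (first [ assumption
  | apply continuity_2d_pt_plus | apply continuity_2d_pt_minus | apply continuity_2d_pt_mult
  | apply continuity_2d_pt_opp | apply continuity_2d_pt_const
  | apply (continuity_1d_2d_pt_comp cos); [apply continuity_cos|]
  | apply (continuity_1d_2d_pt_comp sin); [apply continuity_sin|]
  | apply (continuity_1d_2d_pt_comp (fun y => y ^ 2)); [apply derivable_continuous_pt; apply derivable_pow|]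
  | apply (continuity_1d_2d_pt_comp (fun y => y ^ 3)); [apply derivable_continuous_pt; apply derivable_pow|] ]).

Lemma c2d_of_1d (f : R -> R) t x : continuity_pt f t -> continuity_2d_pt (fun u v => f u) t x.
Proof.
  intros H eps. destruct (H eps (cond_pos eps)) as [d [Hd Hd2]].
  exists (mkposreal d Hd). intros u v Hu _. simpl in Hu.
  destruct (Req_dec u t) as [->|Hne]. rewrite Rminus_eq_0, Rabs_R0. apply cond_pos.
  apply (Hd2 u). split; [split; [exact I|auto]|exact Hu].
Qed.

Section Main.
Variables (t0 t1 : R) (Ht : t0 < t1)
  (phi phit phitt phix lamt lamtt p px : R -> R -> R).
Hypotheses (Hphi_smooth : smooth2 phi) (Hphi_lift : circle_lift phi)
  (Hphit : pd_t phi phit) (Hphitt : pd_t phit phitt) (Hphix : pd_x phi phix)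
  (Hphix_pos : forall t x, t0 <= t <= t1 -> 0 < phix t x)
  (Hlamt : pd_t (lam phix) lamt) (Hlamtt : pd_t lamt lamtt)
  (Hp_smooth : smooth2 p) (Hp_per : periodic_x p) (Hpx : pd_x p px)
  (Heq1 : forall t x, t0 <= t <= t1 ->
     phitt t x + 2 * (lamt t x / lam phix t x) * phit t x
       = - / 2 * px t (phi t x))
  (Heq2 : forall t x, t0 <= t <= t1 ->
     lamtt t x - lam phix t x * phit t x ^ 2
       = - lam phix t x * p t (phi t x))
  (Hhess : forall t x r w1 w2 h, t0 <= t <= t1 -> 0 < r ->
     (w1 <> 0 \/ w2 <> 0) ->
     hess_form (p t) x r w1 w2 h ->
     (t1 - t0) ^ 2 * Rabs h < PI ^ 2 * (w1 ^ 2 + w2 ^ 2)).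
Variables (phi0 phi0t phi0x lam0t : R -> R -> R).
Hypotheses (S0 : smooth2 phi0) (L0 : circle_lift phi0) (D0t : pd_t phi0 phi0t) (D0x : pd_x phi0 phi0x)
  (P0 : forall t x, t0 <= t <= t1 -> 0 < phi0x t x) (DL0 : pd_t (lam phi0x) lam0t)
  (End0 : exists k : Z, forall x, phi0 t0 x = phi t0 x + 2 * IZR k * PI)
  (End1 : exists k : Z, forall x, phi0 t1 x = phi t1 x + 2 * IZR k * PI).
Variables (phixt phixtt phi0xt pxx : R -> R -> R).
Hypotheses (Dphixt : pd_t phix phixt) (Dphixtt : pd_t phixt phixtt) (Sphixtt : smooth2 phixtt)
  (Dphi0xt : pd_t phi0x phi0xt) (Sphi0xt : smooth2 phi0xt) (Dpxx : pd_x px pxx).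

Let T := t1 - t0.
Let HPI := PI_RGT_0.

Lemma Sphit : smooth2 phit. Proof. exact (smooth2_t _ _ Hphi_smooth Hphit). Qed.
Lemma Sphitt : smooth2 phitt. Proof. exact (smooth2_t _ _ Sphit Hphitt). Qed.
Lemma Sphix : smooth2 phix. Proof. exact (smooth2_x _ _ Hphi_smooth Hphix). Qed.
Lemma Sphixt : smooth2 phixt. Proof. exact (smooth2_t _ _ Sphix Dphixt). Qed.
Lemma Sphi0t : smooth2 phi0t. Proof. exact (smooth2_t _ _ S0 D0t). Qed.
Lemma Sphi0x : smooth2 phi0x. Proof. exact (smooth2_x _ _ S0 D0x). Qed.
Lemma Spx : smooth2 px. Proof. exact (smooth2_x _ _ Hp_smooth Hpx). Qed.

Lemma C_phi t x : continuity_2d_pt phi t x. Proof. apply cont2_c2d, smooth2_cont, Hphi_smooth. Qed.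
Lemma C_phit t x : continuity_2d_pt phit t x. Proof. apply cont2_c2d, smooth2_cont, Sphit. Qed.
Lemma C_phitt t x : continuity_2d_pt phitt t x. Proof. apply cont2_c2d, smooth2_cont, Sphitt. Qed.
Lemma C_phix t x : continuity_2d_pt phix t x. Proof. apply cont2_c2d, smooth2_cont, Sphix. Qed.
Lemma C_phixt t x : continuity_2d_pt phixt t x. Proof. apply cont2_c2d, smooth2_cont, Sphixt. Qed.
Lemma C_phixtt t x : continuity_2d_pt phixtt t x. Proof. apply cont2_c2d, smooth2_cont, Sphixtt. Qed.
Lemma C_phi0 t x : continuity_2d_pt phi0 t x. Proof. apply cont2_c2d, smooth2_cont, S0. Qed.
Lemma C_phi0t t x : continuity_2d_pt phi0t t x. Proof. apply cont2_c2d, smooth2_cont, Sphi0t. Qed.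
Lemma C_phi0x t x : continuity_2d_pt phi0x t x. Proof. apply cont2_c2d, smooth2_cont, Sphi0x. Qed.
Lemma C_phi0xt t x : continuity_2d_pt phi0xt t x. Proof. apply cont2_c2d, smooth2_cont, Sphi0xt. Qed.
Lemma C_p t x : continuity_2d_pt p t x. Proof. apply cont2_c2d, smooth2_cont, Hp_smooth. Qed.
Lemma C_px t x : continuity_2d_pt px t x. Proof. apply cont2_c2d, smooth2_cont, Spx. Qed.


Lemma lamt_form_gen (phx phxt lt : R -> R -> R) u v : pd_t phx phxt -> pd_t (lam phx) lt ->
  0 < phx u v -> lt u v = phxt u v / (2 * lam phx u v).
Proof.
  intros D1 D2 Hp. apply (uniqueness_limite (fun s => lam phx s v) u); [apply D2|].
  apply is_derive_Reals. unfold lam.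
  assert (H1 := D1 u v). apply is_derive_Reals in H1.
  auto_derive.
  - split; [eexists; exact H1|split; [exact Hp|auto]].
  - rewrite (is_derive_unique _ _ _ H1). field.
    apply Rgt_not_eq, sqrt_lt_R0, Hp.
Qed.

Lemma lamt_form u v : 0 < phix u v -> lamt u v = phixt u v / (2 * lam phix u v).
Proof. apply lamt_form_gen; auto. Qed.
Lemma lam0t_form u v : 0 < phi0x u v -> lam0t u v = phi0xt u v / (2 * lam phi0x u v).
Proof. apply lamt_form_gen; auto. Qed.

Lemma lamtt_form u v : 0 < phix u v ->
  lamtt u v = phixtt u v / (2 * lam phix u v) - phixt u v ^ 2 / (4 * lam phix u v ^ 3).
Proof.
  intros Hp. apply (uniqueness_limite (fun s => lamt s v) u); [apply Hlamtt|].
  apply is_derive_Reals.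
  apply (is_derive_ext_loc (fun s => phixt s v / (2 * sqrt (phix s v)))).
  - assert (Hc := C_phix u v). apply c2d_cont_t in Hc.
    apply continuity_pt_filterlim in Hc.
    destruct (Hc (phix u v) Hp) as [d [Hd Hd2]].
    exists (mkposreal d Hd). intros s Hs.
    rewrite lamt_form; [reflexivity|].
    destruct (Req_dec s u) as [->|Hne]; [exact Hp|].
    assert (Hdd : D_x no_cond u s) by (split; [exact I|auto]).
    specialize (Hd2 s (conj Hdd Hs)). simpl in Hd2. unfold R_dist in Hd2.
    apply Rabs_def2 in Hd2. lra.
  - assert (H1 := Dphixtt u v). apply is_derive_Reals in H1.
    assert (H2 := Dphixt u v). apply is_derive_Reals in H2.
    auto_derive.
    + repeat split; try (eexists; eassumption); auto.
      apply Rgt_not_eq, Rlt_gt, Rmult_lt_0_compat; [lra|apply sqrt_lt_R0, Hp].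
    + rewrite (is_derive_unique _ _ _ H1), (is_derive_unique _ _ _ H2). unfold lam.
      assert (Hs := sqrt_lt_R0 _ Hp). assert (Hss := sqrt_sqrt (phix u v) (Rlt_le _ _ Hp)).
      set (sq := sqrt (phix u v)) in *. field. lra.
Qed.

Lemma c2d_sqrt (f : R -> R -> R) t x : continuity_2d_pt f t x -> 0 < f t x ->
  continuity_2d_pt (fun u v => sqrt (f u v)) t x.
Proof.
  intros H Hp. apply (continuity_1d_2d_pt_comp sqrt f); auto.
  apply continuity_pt_sqrt. lra.
Qed.

Lemma c2d_div (f g : R -> R -> R) t x : continuity_2d_pt f t x -> continuity_2d_pt g t x ->
  g t x <> 0 -> continuity_2d_pt (fun u v => f u v / g u v) t x.
Proof.
  intros H1 H2 H3. unfold Rdiv. apply continuity_2d_pt_mult; auto.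
  apply continuity_2d_pt_inv; auto.
Qed.

Lemma C_lm t x : 0 < phix t x -> continuity_2d_pt (lam phix) t x.
Proof. intros H. unfold lam. apply c2d_sqrt; auto. apply C_phix. Qed.
Lemma C_lm0 t x : 0 < phi0x t x -> continuity_2d_pt (lam phi0x) t x.
Proof. intros H. unfold lam. apply c2d_sqrt; auto. apply C_phi0x. Qed.

Lemma C_lamt t x : 0 < phix t x -> continuity_2d_pt lamt t x.
Proof.
  intros H. apply (continuity_2d_pt_ext_loc (fun u v => phixt u v / (2 * lam phix u v))).
  - destruct (c2d_locpos _ _ _ (C_phix t x) H) as [d Hd]. exists d. intros u v Hu Hv.
    rewrite lamt_form; auto.
  - apply c2d_div. apply C_phixt. apply continuity_2d_pt_mult. apply continuity_2d_pt_const.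
    apply C_lm; auto. unfold lam. apply Rgt_not_eq, Rlt_gt, Rmult_lt_0_compat; [lra|apply sqrt_lt_R0, H].
Qed.

Lemma C_lam0t t x : 0 < phi0x t x -> continuity_2d_pt lam0t t x.
Proof.
  intros H. apply (continuity_2d_pt_ext_loc (fun u v => phi0xt u v / (2 * lam phi0x u v))).
  - destruct (c2d_locpos _ _ _ (C_phi0x t x) H) as [d Hd]. exists d. intros u v Hu Hv.
    rewrite lam0t_form; auto.
  - apply c2d_div. apply C_phi0xt. apply continuity_2d_pt_mult. apply continuity_2d_pt_const.
    apply C_lm0; auto. unfold lam. apply Rgt_not_eq, Rlt_gt, Rmult_lt_0_compat; [lra|apply sqrt_lt_R0, H].
Qed.

Lemma C_lamtt t x : 0 < phix t x -> continuity_2d_pt lamtt t x.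
Proof.
  intros H. apply (continuity_2d_pt_ext_loc
     (fun u v => phixtt u v / (2 * lam phix u v) - phixt u v ^ 2 / (4 * lam phix u v ^ 3))).
  - destruct (c2d_locpos _ _ _ (C_phix t x) H) as [d Hd]. exists d. intros u v Hu Hv.
    rewrite lamtt_form; auto.
  - assert (Hl : 0 < lam phix t x) by (apply sqrt_lt_R0, H).
    apply continuity_2d_pt_minus; apply c2d_div.
    + apply C_phixtt.
    + apply continuity_2d_pt_mult. apply continuity_2d_pt_const. apply C_lm; auto.
    + apply Rgt_not_eq, Rlt_gt, Rmult_lt_0_compat; lra.
    + apply (continuity_1d_2d_pt_comp (fun y => y ^ 2)); [apply derivable_continuous_pt; apply derivable_pow|apply C_phixt].
    + apply continuity_2d_pt_mult. apply continuity_2d_pt_const.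
      apply (continuity_1d_2d_pt_comp (fun y => y ^ 3)); [apply derivable_continuous_pt; apply derivable_pow|apply C_lm; auto].
    + apply Rgt_not_eq, Rlt_gt, Rmult_lt_0_compat; [lra|apply pow_lt; lra].
Qed.

Definition lm := lam phix.
Definition lm0 := lam phi0x.
Definition dl (w : R) := (PI - w * T) / 2.
Definition aw (w t : R) := w * cos (w * (t - t0) + dl w) / sin (w * (t - t0) + dl w).
Definition Gf w t x := Gexp (lm t x) (lamt t x) (phi t x) (phit t x) (lm0 t x) (phi0 t x) (aw w t).
Definition Gtf w t x := Gtexp (lm t x) (lamt t x) (lamtt t x) (phi t x) (phit t x) (phitt t x)
   (lm0 t x) (lam0t t x) (phi0 t x) (phi0t t x) (aw w t) (- w ^ 2 - aw w t ^ 2).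
Definition Wf w t x := Wexp (lm t x) (lamt t x) (phi t x) (phit t x) (lm0 t x) (lam0t t x) (phi0 t x) (phi0t t x) (aw w t).
Definition Hf t x := Hexp (lm t x) (phi t x) (lm0 t x) (phi0 t x).
Definition AEf t x := AEexp (lm t x) (lamt t x) (lamtt t x) (phi t x) (phit t x) (phitt t x) (lm0 t x) (phi0 t x).
Definition Pf t x := lm t x ^ 2 * p t (phi t x).
Definition P0f t x := lm0 t x ^ 2 * p t (phi0 t x).
Definition Rf t x := / 2 * P0f t x - / 2 * Pf t x + AEf t x.
Definition en t x := lam phix t x ^ 2 * phit t x ^ 2 + lamt t x ^ 2.
Definition en0 t x := lam phi0x t x ^ 2 * phi0t t x ^ 2 + lam0t t x ^ 2.

Definition gd t x := 0 < phix t x /\ 0 < phi0x t x.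
Definition sgood w t := sin (w * (t - t0) + dl w) <> 0.

Lemma D_aw w t : sgood w t -> derivable_pt_lim (aw w) t (- w ^ 2 - aw w t ^ 2).
Proof.
  intros Hs. apply is_derive_Reals. unfold aw. auto_derive.
  - auto.
  - assert (H := sin2_cos2 (w * (t - t0) + dl w)). unfold Rsqr in H.
    replace (t + - t0) with (t - t0) by ring. field. auto.
Qed.

Lemma C_aw w t x : sgood w t -> continuity_2d_pt (fun u v => aw w u) t x.
Proof. intros H. apply c2d_of_1d. apply (dlim_cont _ _ _ (D_aw w t H)). Qed.

Ltac c2dm := repeat (first [ assumption
  | apply C_aw; assumption
  | apply C_phi | apply C_phit | apply C_phitt | apply C_phi0 | apply C_phi0t
  | apply C_lm; assumption | apply C_lm0; assumption | apply C_lamt; assumption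
  | apply C_lamtt; assumption | apply C_lam0t; assumption
  | apply (c2d_comp2 p); [intros; apply C_p|]
  | apply (continuity_1d_2d_pt_comp cos); [apply continuity_cos|]
  | apply (continuity_1d_2d_pt_comp sin); [apply continuity_sin|]
  | apply (continuity_1d_2d_pt_comp (fun y => y ^ 2)); [apply derivable_continuous_pt; apply derivable_pow|]
  | apply continuity_2d_pt_plus | apply continuity_2d_pt_minus | apply continuity_2d_pt_mult
  | apply continuity_2d_pt_opp | apply continuity_2d_pt_const ]).

Lemma C_Hf t x : gd t x -> continuity_2d_pt Hf t x.
Proof. intros [H1 H2]. unfold Hf, Hexp, lm, lm0. c2dm. Qed.
Lemma C_Rf t x : gd t x -> continuity_2d_pt Rf t x.
Proof. intros [H1 H2]. unfold Rf, P0f, Pf, AEf, AEexp, lm, lm0. c2dm. Qed.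
Lemma C_Gtf w t x : gd t x -> sgood w t -> continuity_2d_pt (Gtf w) t x.
Proof. intros [H1 H2] H3. unfold Gtf, Gtexp, lm, lm0. c2dm. Qed.
Lemma C_Gf w t x : gd t x -> sgood w t -> continuity_2d_pt (Gf w) t x.
Proof. intros [H1 H2] H3. unfold Gf, Gexp, lm, lm0. c2dm. Qed.
Lemma C_Wf w t x : gd t x -> sgood w t -> continuity_2d_pt (Wf w) t x.
Proof. intros [H1 H2] H3. unfold Wf, Wexp, lm, lm0. c2dm. Qed.
Lemma C_en t x : gd t x -> continuity_2d_pt en t x.
Proof. intros [H1 H2]. unfold en. c2dm. Qed.
Lemma C_en0 t x : gd t x -> continuity_2d_pt en0 t x.
Proof. intros [H1 H2]. unfold en0. c2dm. Qed.
Lemma C_Pf t x : gd t x -> continuity_2d_pt Pf t x.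
Proof. intros [H1 H2]. unfold Pf, lm. c2dm. Qed.
Lemma C_P0f t x : gd t x -> continuity_2d_pt P0f t x.
Proof. intros [H1 H2]. unfold P0f, lm0. c2dm. Qed.

Lemma good_nbhd : exists e, 0 < e /\ forall y x, t0 - e < y < t1 + e -> 0 <= x <= 2 * PI -> gd y x.
Proof.
  destruct (pos_nbhd phix t0 t1) as [e1 [He1 H1]]; [lra|apply C_phix|intros; apply Hphix_pos; auto|].
  destruct (pos_nbhd phi0x t0 t1) as [e2 [He2 H2]]; [lra|apply C_phi0x|intros; apply P0; auto|].
  exists (Rmin e1 e2). split; [apply Rmin_pos; auto|].
  intros y x Hy Hx. pose proof (Rmin_l e1 e2). pose proof (Rmin_r e1 e2).
  split; [apply H1|apply H2]; auto; lra.
Qed.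

Lemma sgood_region w y : 0 < w < PI / T -> t0 - dl w / w < y < t1 + dl w / w -> sgood w y.
Proof.
  intros Hw Hy. unfold sgood. apply Rgt_not_eq, Rlt_gt, sin_gt_0.
  - assert (- (dl w / w) < y - t0) by lra.
    apply (Rmult_lt_compat_l w) in H; [|lra].
    replace (w * - (dl w / w)) with (- dl w) in H by (field; lra). lra.
  - assert (y - t0 < T + dl w / w) by (unfold T; lra).
    apply (Rmult_lt_compat_l w) in H; [|lra].
    replace (w * (T + dl w / w)) with (w * T + dl w) in H by (field; lra).
    unfold dl in *. lra.
Qed.

Lemma dl_pos w : 0 < w < PI / T -> 0 < dl w / w.
Proof.
  intros Hw. unfold dl. apply Rdiv_lt_0_compat; [|lra].
  assert (w * T < PI).
  { destruct Hw as [_ Hw']. apply (Rmult_lt_compat_r T) in Hw'; [|unfold T; lra].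
    unfold Rdiv in Hw'. rewrite Rmult_assoc, Rinv_l in Hw' by (unfold T; lra). lra. }
  lra.
Qed.

Lemma locally_of_abs (P : R -> Prop) t r : 0 < r -> (forall y, Rabs (y - t) < r -> P y) -> locally t P.
Proof.
  intros Hr H. exists (mkposreal r Hr). intros y Hy. apply H.
  unfold ball in Hy; simpl in Hy; unfold AbsRing_ball, abs, minus, plus, opp in Hy; simpl in Hy. exact Hy.
Qed.

Lemma D_G w u v : sgood w u -> derivable_pt_lim (fun z => Gf w z v) u (Gtf w u v).
Proof.
  intros Hs. unfold Gf, Gtf.
  apply (dGexp (fun s => lm s v) (fun s => lamt s v) (fun s => lamtt s v) (fun s => phi s v)
     (fun s => phit s v) (fun s => phitt s v) (fun s => lm0 s v) (fun s => lam0t s v)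
     (fun s => phi0 s v) (fun s => phi0t s v) (aw w) (fun s => - w ^ 2 - aw w s ^ 2)).
  - apply Hlamt. - apply Hlamtt. - apply Hphit. - apply Hphitt. - apply DL0. - apply D0t.
  - apply D_aw, Hs.
Qed.

Lemma ex_at (F : R -> R -> R) t : (forall x, 0 <= x <= 2 * PI -> continuity_2d_pt F t x) ->
  ex_RInt (F t) 0 (2 * PI).
Proof.
  intros H. apply exRc. intros z Hz. rewrite Rmin_left, Rmax_right in Hz by lra.
  apply c2d_cont_x, H, Hz.
Qed.

Lemma gd_in t x : t0 <= t <= t1 -> gd t x.
Proof. intros H. split; [apply Hphix_pos|apply P0]; auto. Qed.

Lemma Pf_int t : t0 <= t <= t1 -> RInt (Pf t) 0 (2 * PI) = RInt (P0f t) 0 (2 * PI).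
Proof.
  intros Ht'.
  assert (Hq : forall x, continuous (p t) x) by (intros; apply c2d_cont_x, C_p).
  assert (Ep : phi t (2 * PI) = phi t 0 + 2 * PI) by (rewrite <- Hphi_lift; f_equal; ring).
  assert (Ep0 : phi0 t (2 * PI) = phi0 t 0 + 2 * PI) by (rewrite <- L0; f_equal; ring).
  transitivity (RInt (p t) 0 (2 * PI)); [|symmetry].
  - rewrite <- (cov (p t) (phi t) (phix t) Hq (fun x => Hp_per t x) (fun x _ => Hphix t x)
      (fun x _ => c2d_cont_x _ _ _ (C_phix t x)) Ep).
    apply RInt_ext. intros x _. unfold Pf, lm, lam. rewrite pow2_sqrt; auto.
    apply Rlt_le, Hphix_pos, Ht'.
  - rewrite <- (cov (p t) (phi0 t) (phi0x t) Hq (fun x => Hp_per t x) (fun x _ => D0x t x)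
      (fun x _ => c2d_cont_x _ _ _ (C_phi0x t x)) Ep0).
    apply RInt_ext. intros x _. unfold P0f, lm0, lam. rewrite pow2_sqrt; auto.
    apply Rlt_le, P0, Ht'.
Qed.

Lemma end_same tt : (exists k : Z, forall x, phi0 tt x = phi tt x + 2 * IZR k * PI) ->
  forall x, lm0 tt x = lm tt x /\ cos (phi0 tt x) = cos (phi tt x) /\ sin (phi0 tt x) = sin (phi tt x).
Proof.
  intros [k Hk] x.
  assert (Hd : phi0x tt x = phix tt x).
  { apply (uniqueness_limite (phi0 tt) x); [apply D0x|].
    apply (derivable_pt_lim_ext (fun y => phi tt y + 2 * IZR k * PI)); [intros; symmetry; apply Hk|].
    replace (phix tt x) with (phix tt x + 0) by ring.
    apply derivable_pt_lim_plus; [apply Hphix|apply derivable_pt_lim_const]. }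
  unfold lm0, lm, lam. rewrite Hd, Hk. split; [auto|split].
  - apply (per_Z cos cos_2PI_per).
  - apply (per_Z sin sin_2PI_per).
Qed.

Lemma Ht_cont t : t0 <= t <= t1 -> continuous (fun y => RInt (Hf y) 0 (2 * PI)) t.
Proof.
  intros Ht'. destruct good_nbhd as [r [Hr Hreg]].
  apply (param_cont _ 0 (2 * PI) t (r / 2)); [lra|lra|].
  intros u x Hu Hx. apply C_Hf; apply (Hreg u x); auto; lra.
Qed.
Lemma Rt_cont t : t0 <= t <= t1 -> continuous (fun y => RInt (Rf y) 0 (2 * PI)) t.
Proof.
  intros Ht'. destruct good_nbhd as [r [Hr Hreg]].
  apply (param_cont _ 0 (2 * PI) t (r / 2)); [lra|lra|].
  intros u x Hu Hx. apply C_Rf; apply (Hreg u x); auto; lra.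
Qed.

Lemma ex_cont_int (f : R -> R) : (forall t, t0 <= t <= t1 -> continuous f t) -> ex_RInt f t0 t1.
Proof. intros H. apply exRc. intros z Hz. rewrite Rmin_left, Rmax_right in Hz by lra. auto. Qed.

Lemma is_RInt_valR (f : R -> R) a b l1 l2 : is_RInt f a b l1 -> l1 = l2 -> is_RInt f a b l2.
Proof. intros H ->; exact H. Qed.

Lemma energy_conv (ft fx lt : R -> R -> R) E :
  energy ft fx lt t0 t1 E -> exists I, (forall t, t0 <= t <= t1 ->
     I t = RInt (fun x => lam fx t x ^ 2 * ft t x ^ 2 + lt t x ^ 2) 0 (2 * PI)) /\ is_RInt I t0 t1 E.
Proof.
  intros [I [H1 H2]]. exists I. split.
  - intros t Ht'. symmetry. apply is_RInt_unique, RInt_of_Riemann, H1, Ht'.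
  - apply RInt_of_Riemann, H2.
Qed.

Lemma px_per t x : px t (x + 2 * PI) = px t x.
Proof.
  apply (uniqueness_limite (fun y => p t y) x); [|apply Hpx].
  apply (derivable_pt_lim_ext (fun y => p t (y + 2 * PI))); [intros; apply Hp_per|].
  apply is_derive_Reals.
  assert (H1 : is_derive (fun y : R => y + 2 * PI) x 1) by (auto_derive; auto; ring).
  pose proof (is_derive_comp (p t) (fun y => y + 2 * PI) x (px t (x + 2 * PI)) 1
    (proj2 (is_derive_Reals _ _ _) (Hpx t (x + 2 * PI))) H1) as H2.
  eapply is_derive_val; [exact H2|]. unfold scal; simpl; unfold mult; simpl. ring.
Qed.

Lemma lm_pos t x : t0 <= t <= t1 -> 0 < lm t x.
Proof. intros H. apply sqrt_lt_R0, Hphix_pos, H. Qed.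
Lemma lm0_pos t x : t0 <= t <= t1 -> 0 < lm0 t x.
Proof. intros H. apply sqrt_lt_R0, P0, H. Qed.

Lemma Rf_lt t x : t0 <= t <= t1 -> Hf t x <> 0 -> Rf t x < PI ^ 2 / (2 * T ^ 2) * Hf t x.
Proof.
  intros Ht' HH.
  assert (HE : lm0 t x * cos (phi0 t x) - lm t x * cos (phi t x) <> 0 \/
               lm0 t x * sin (phi0 t x) - lm t x * sin (phi t x) <> 0).
  { unfold Hf, Hexp in HH.
    destruct (Req_dec (lm0 t x * cos (phi0 t x) - lm t x * cos (phi t x)) 0) as [E|E]; [right|left; auto].
    intro E'. apply HH. rewrite E, E'. ring. }
  pose proof (Rbound (p t) (px t) (pxx t) T ltac:(unfold T; lra) (Hp_per t) (px_per t) (Hpx t) (Dpxx t)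
    (fun x r w1 w2 h => Hhess t x r w1 w2 h Ht') (lm t x) (lm0 t x) (phi t x) (phi0 t x)
    (lm_pos t x Ht') (lm0_pos t x Ht') HE) as HR.
  unfold Rf, AEf, P0f, Pf, Hf, Hexp.
  rewrite (AE_heq _ _ _ _ _ _ _ _ (p t (phi t x)) (px t (phi t x)) (lm_pos t x Ht')).
  - lra.
  - apply Heq2, Ht'.
  - apply Heq1, Ht'.
Qed.

Lemma Rf_zero t x : t0 <= t <= t1 -> Hf t x = 0 -> Rf t x = 0.
Proof.
  intros Ht' HH. unfold Hf, Hexp in HH.
  set (a := lm0 t x * cos (phi0 t x) - lm t x * cos (phi t x)) in *.
  set (b := lm0 t x * sin (phi0 t x) - lm t x * sin (phi t x)) in *.
  assert (Ha : a = 0) by nra. assert (Hb : b = 0) by nra.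
  assert (Hl := lm_pos t x Ht'). assert (Hl0 := lm0_pos t x Ht').
  assert (Hc := sin2_cos2 (phi t x)). assert (Hc0 := sin2_cos2 (phi0 t x)). unfold Rsqr in *.
  assert (Hll : lm0 t x = lm t x).
  { assert (lm0 t x ^ 2 = lm t x ^ 2).
    { replace (lm0 t x ^ 2) with ((lm0 t x * cos (phi0 t x)) ^ 2 + (lm0 t x * sin (phi0 t x)) ^ 2)
        by (simpl; nra).
      replace (lm t x ^ 2) with ((lm t x * cos (phi t x)) ^ 2 + (lm t x * sin (phi t x)) ^ 2)
        by (simpl; nra).
      unfold a, b in Ha, Hb. replace (lm0 t x * cos (phi0 t x)) with (lm t x * cos (phi t x)) by lra.
      replace (lm0 t x * sin (phi0 t x)) with (lm t x * sin (phi t x)) by lra. ring. }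
    nra. }
  unfold a, b in Ha, Hb. rewrite Hll in Ha, Hb.
  assert (Ec : cos (phi0 t x) = cos (phi t x)) by (apply (Rmult_eq_reg_l (lm t x)); lra).
  assert (Es : sin (phi0 t x) = sin (phi t x)) by (apply (Rmult_eq_reg_l (lm t x)); lra).
  destruct (angle_eq _ _ Ec Es) as [k Hk].
  assert (Ep : p t (phi0 t x) = p t (phi t x)) by (rewrite Hk; apply (per_Z (p t) (Hp_per t))).
  unfold Rf, P0f, Pf, AEf, AEexp. rewrite Hll, Ep, Ec, Es. ring.
Qed.

Section W.
Variable w : R.
Hypothesis Hw : 0 < w < PI / T.

Lemma region : exists r, 0 < r /\ forall y x, t0 - r < y < t1 + r -> 0 <= x <= 2 * PI -> gd y x /\ sgood w y.
Proof.
  destruct good_nbhd as [e [He H]].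
  pose proof (dl_pos w Hw).
  exists (Rmin e (dl w / w)). split; [apply Rmin_pos; auto|].
  intros y x Hy Hx. pose proof (Rmin_l e (dl w / w)). pose proof (Rmin_r e (dl w / w)).
  split; [apply H; auto; lra|apply sgood_region; auto; lra].
Qed.

Lemma K_deriv t : t0 <= t <= t1 ->
  is_derive (fun y => RInt (fun x => Gf w y x) 0 (2 * PI)) t (RInt (fun x => Gtf w t x) 0 (2 * PI)).
Proof.
  intros Ht'. destruct region as [r [Hr Hreg]].
  assert (Hst : sgood w t) by (apply (Hreg t 0); lra).
  apply is_derive_val with (l1 := RInt (fun s => Derive (fun u => Gf w u s) t) 0 (2 * PI)).
  - apply (is_derive_RInt_param (fun y x => Gf w y x)).
    + apply (locally_of_abs _ t r Hr). intros y Hy s Hs.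
      assert (Hsy : sgood w y) by (apply (Hreg y 0); [apply Rabs_def2 in Hy; lra|lra]).
      exists (Gtf w y s). apply is_derive_Reals, D_G, Hsy.
    + intros s Hs. rewrite Rmin_left, Rmax_right in Hs by lra.
      apply (continuity_2d_pt_ext_loc (Gtf w)).
      * exists (mkposreal r Hr). intros u v Hu _. simpl in Hu.
        symmetry. apply is_derive_unique. apply is_derive_Reals, D_G.
        apply (Hreg u 0); [apply Rabs_def2 in Hu; lra|lra].
      * apply C_Gtf; [apply (Hreg t s); auto; lra|auto].
    + apply (locally_of_abs _ t r Hr). intros y Hy.
      apply exRc. intros z Hz. rewrite Rmin_left, Rmax_right in Hz by lra.
      apply c2d_cont_x. apply Rabs_def2 in Hy.
      apply C_Gf; apply (Hreg y z); auto; lra.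
  - apply RInt_ext. intros s _. apply is_derive_unique, is_derive_Reals, D_G, Hst.
Qed.

Lemma K'_cont t : t0 <= t <= t1 -> continuous (fun y => RInt (fun x => Gtf w y x) 0 (2 * PI)) t.
Proof.
  intros Ht'. destruct region as [r [Hr Hreg]].
  apply (param_cont _ 0 (2 * PI) t (r / 2)); [lra|lra|].
  intros u x Hu Hx. apply C_Gtf; apply (Hreg u x); auto; lra.
Qed.

Lemma ident_t t : t0 <= t <= t1 ->
  / 2 * (RInt (en0 t) 0 (2 * PI) - RInt (en t) 0 (2 * PI)) =
  RInt (Gtf w t) 0 (2 * PI) + RInt (Wf w t) 0 (2 * PI) + / 2 * w ^ 2 * RInt (Hf t) 0 (2 * PI)
   - RInt (Rf t) 0 (2 * PI).
Proof.
  intros Ht'. destruct region as [r [Hr Hreg]].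
  assert (Hs : sgood w t) by (apply (Hreg t 0); lra).
  assert (G : forall x, 0 <= x <= 2 * PI -> gd t x) by (intros; apply gd_in; auto).
  assert (X1 : ex_RInt (en0 t) 0 (2 * PI)) by (apply ex_at; intros; apply C_en0; auto).
  assert (X2 : ex_RInt (en t) 0 (2 * PI)) by (apply ex_at; intros; apply C_en; auto).
  assert (X3 : ex_RInt (Gtf w t) 0 (2 * PI)) by (apply ex_at; intros; apply C_Gtf; auto).
  assert (X4 : ex_RInt (Wf w t) 0 (2 * PI)) by (apply ex_at; intros; apply C_Wf; auto).
  assert (X5 : ex_RInt (Hf t) 0 (2 * PI)) by (apply ex_at; intros; apply C_Hf; auto).
  assert (X6 : ex_RInt (Rf t) 0 (2 * PI)) by (apply ex_at; intros; apply C_Rf; auto).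
  assert (X7 : ex_RInt (Pf t) 0 (2 * PI)) by (apply ex_at; intros; apply C_Pf; auto).
  assert (X8 : ex_RInt (P0f t) 0 (2 * PI)) by (apply ex_at; intros; apply C_P0f; auto).
  assert (E1 : RInt (fun x => / 2 * (en0 t x - en t x)) 0 (2 * PI)
     = / 2 * (RInt (en0 t) 0 (2 * PI) - RInt (en t) 0 (2 * PI))).
  { rewrite RInt_scalR. f_equal. apply RInt_minusR; auto. apply ex_RInt_minusR; auto. }
  rewrite <- E1.
  assert (E2 : RInt (fun x => / 2 * (en0 t x - en t x)) 0 (2 * PI) =
    RInt (fun x => (Gtf w t x + Wf w t x + / 2 * w ^ 2 * Hf t x - Rf t x)
                   + (/ 2 * P0f t x - / 2 * Pf t x)) 0 (2 * PI)).
  { apply RInt_ext. intros x _. unfold en0, en, Gtf, Wf, Hf, Rf, AEf, lm, lm0.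
    rewrite (ident_val (lam phix t x) (lamt t x) (lamtt t x) (phi t x) (phit t x) (phitt t x)
        (lam phi0x t x) (lam0t t x) (phi0 t x) (phi0t t x) (aw w t) w).
    match goal with |- ?a = ?b => change (@eq R a b) end. unfold P0f, Pf, lm, lm0. ring. }
  rewrite E2.
  assert (XA : ex_RInt (fun x => Gtf w t x + Wf w t x) 0 (2 * PI)) by (apply ex_RInt_plusR; auto).
  assert (XB : ex_RInt (fun x => Gtf w t x + Wf w t x + / 2 * w ^ 2 * Hf t x) 0 (2 * PI))
    by (apply ex_RInt_plusR; auto; apply ex_RInt_scalR; auto).
  assert (XC : ex_RInt (fun x => Gtf w t x + Wf w t x + / 2 * w ^ 2 * Hf t x - Rf t x) 0 (2 * PI))
    by (apply ex_RInt_minusR; auto).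
  assert (XD : ex_RInt (fun x => / 2 * P0f t x - / 2 * Pf t x) 0 (2 * PI))
    by (apply ex_RInt_minusR; apply ex_RInt_scalR; auto).
  assert (E3 : RInt (fun x => (Gtf w t x + Wf w t x + / 2 * w ^ 2 * Hf t x - Rf t x)
                   + (/ 2 * P0f t x - / 2 * Pf t x)) 0 (2 * PI) =
     RInt (fun x => Gtf w t x + Wf w t x + / 2 * w ^ 2 * Hf t x - Rf t x) 0 (2 * PI)
     + RInt (fun x => / 2 * P0f t x - / 2 * Pf t x) 0 (2 * PI)) by (apply RInt_plusR; auto).
  assert (E4 : RInt (fun x => / 2 * P0f t x - / 2 * Pf t x) 0 (2 * PI) = 0).
  { assert (E : RInt (fun x => / 2 * P0f t x - / 2 * Pf t x) 0 (2 * PI) =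
       RInt (fun x => / 2 * P0f t x) 0 (2 * PI) - RInt (fun x => / 2 * Pf t x) 0 (2 * PI))
      by (apply RInt_minusR; apply ex_RInt_scalR; auto).
    rewrite E, !RInt_scalR, Pf_int by auto. match goal with |- ?a = ?b => change (@eq R a b) end. ring. }
  assert (E5 : RInt (fun x => Gtf w t x + Wf w t x + / 2 * w ^ 2 * Hf t x - Rf t x) 0 (2 * PI) =
     RInt (fun x => Gtf w t x + Wf w t x + / 2 * w ^ 2 * Hf t x) 0 (2 * PI) - RInt (Rf t) 0 (2 * PI))
    by (apply RInt_minusR; auto).
  assert (E6 : RInt (fun x => Gtf w t x + Wf w t x + / 2 * w ^ 2 * Hf t x) 0 (2 * PI) =
     RInt (fun x => Gtf w t x + Wf w t x) 0 (2 * PI) + RInt (fun x => / 2 * w ^ 2 * Hf t x) 0 (2 * PI))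
    by (apply RInt_plusR; auto; apply ex_RInt_scalR; auto).
  assert (E7 : RInt (fun x => Gtf w t x + Wf w t x) 0 (2 * PI) =
     RInt (Gtf w t) 0 (2 * PI) + RInt (Wf w t) 0 (2 * PI)) by (apply RInt_plusR; auto).
  rewrite E3, E4, E5, E6, E7, RInt_scalR by auto. match goal with |- ?a = ?b => change (@eq R a b) end. ring.
Qed.

Lemma Gf_end tt : (exists k : Z, forall x, phi0 tt x = phi tt x + 2 * IZR k * PI) ->
  RInt (Gf w tt) 0 (2 * PI) = 0.
Proof.
  intros Hk.
  transitivity (RInt (fun _ : R => 0) 0 (2 * PI)).
  - apply RInt_ext. intros x _. destruct (end_same tt Hk x) as [E1 [E2 E3]].
    unfold Gf, Gexp. rewrite E1, E2, E3.
    match goal with |- ?a = ?b => change (@eq R a b) end. ring.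
  - rewrite RInt_const. unfold scal; simpl; unfold mult; simpl. ring.
Qed.

Lemma K_int : is_RInt (fun t => RInt (Gtf w t) 0 (2 * PI)) t0 t1 0.
Proof.
  apply (is_RInt_valR _ _ _ (minus (RInt (Gf w t1) 0 (2 * PI)) (RInt (Gf w t0) 0 (2 * PI)))).
  - apply (is_RInt_derive (fun y => RInt (fun x => Gf w y x) 0 (2 * PI))).
    + intros x Hx. rewrite Rmin_left, Rmax_right in Hx by lra. apply K_deriv, Hx.
    + intros x Hx. rewrite Rmin_left, Rmax_right in Hx by lra. apply K'_cont, Hx.
  - rewrite (Gf_end t1 End1), (Gf_end t0 End0). unfold minus, plus, opp; simpl. ring.
Qed.

Lemma Wexp_nonneg l lt f ft l0 l0t f0 f0t a : 0 <= Wexp l lt f ft l0 l0t f0 f0t a.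
Proof.
  unfold Wexp. apply Rmult_le_pos; [lra|].
  apply Rplus_le_le_0_compat; apply pow2_ge_0.
Qed.

Lemma ineq_w (I I0 : R -> R) E E0 :
  (forall t, t0 <= t <= t1 -> I t = RInt (en t) 0 (2 * PI)) -> is_RInt I t0 t1 E ->
  (forall t, t0 <= t <= t1 -> I0 t = RInt (en0 t) 0 (2 * PI)) -> is_RInt I0 t0 t1 E0 ->
  / 2 * w ^ 2 * RInt (fun t => RInt (Hf t) 0 (2 * PI)) t0 t1
    - RInt (fun t => RInt (Rf t) 0 (2 * PI)) t0 t1 <= / 2 * (E0 - E).
Proof.
  intros HI HIi HI0 HI0i.
  set (X := RInt (fun t => RInt (Hf t) 0 (2 * PI)) t0 t1).
  set (Y := RInt (fun t => RInt (Rf t) 0 (2 * PI)) t0 t1).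
  assert (iX : is_RInt (fun t => RInt (Hf t) 0 (2 * PI)) t0 t1 X).
  { apply (@RInt_correct R_CompleteNormedModule). apply ex_cont_int. apply Ht_cont. }
  assert (iY : is_RInt (fun t => RInt (Rf t) 0 (2 * PI)) t0 t1 Y).
  { apply (@RInt_correct R_CompleteNormedModule). apply ex_cont_int. apply Rt_cont. }
  assert (iW : is_RInt (fun t => RInt (Wf w t) 0 (2 * PI)) t0 t1
                  (/ 2 * (E0 - E) - 0 - / 2 * w ^ 2 * X + Y)).
  { apply (is_RInt_ext (fun t => / 2 * (I0 t - I t) - RInt (Gtf w t) 0 (2 * PI)
                          - / 2 * w ^ 2 * RInt (Hf t) 0 (2 * PI) + RInt (Rf t) 0 (2 * PI))).
    - intros t Ht'. rewrite Rmin_left, Rmax_right in Ht' by lra.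
      rewrite HI, HI0 by lra. rewrite (ident_t t) by lra. match goal with |- ?a = ?b => change (@eq R a b) end. ring.
    - apply is_RInt_plusR; auto. apply is_RInt_minusR; [apply is_RInt_minusR|apply is_RInt_scalR; auto].
      + apply is_RInt_scalR, is_RInt_minusR; auto.
      + apply K_int. }
  assert (HW : 0 <= RInt (fun t => RInt (Wf w t) 0 (2 * PI)) t0 t1).
  { apply RInt_ge_0; [lra|exists (/ 2 * (E0 - E) - 0 - / 2 * w ^ 2 * X + Y); exact iW|].
    intros t Ht'. destruct region as [r [Hr Hreg]].
    apply RInt_ge_0; [lra| |].
    - apply ex_at. intros x Hx. apply C_Wf; apply (Hreg t x); auto; lra.
    - intros; apply Wexp_nonneg. }
  rewrite (is_RInt_unique _ _ _ _ iW) in HW. lra.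
Qed.

End W.

Lemma hf0_angle t x : t0 <= t <= t1 -> Hf t x = 0 -> exists k : Z, phi0 t x = phi t x + 2 * IZR k * PI.
Proof.
  intros Ht' HH. unfold Hf, Hexp in HH.
  set (a := lm0 t x * cos (phi0 t x) - lm t x * cos (phi t x)) in *.
  set (b := lm0 t x * sin (phi0 t x) - lm t x * sin (phi t x)) in *.
  assert (Ha : a = 0) by nra. assert (Hb : b = 0) by nra.
  assert (Hl := lm_pos t x Ht'). assert (Hl0 := lm0_pos t x Ht').
  assert (Hc := sin2_cos2 (phi t x)). assert (Hc0 := sin2_cos2 (phi0 t x)). unfold Rsqr in *.
  assert (Hll : lm0 t x = lm t x).
  { assert (lm0 t x ^ 2 = lm t x ^ 2).
    { replace (lm0 t x ^ 2) with ((lm0 t x * cos (phi0 t x)) ^ 2 + (lm0 t x * sin (phi0 t x)) ^ 2)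
        by (simpl; nra).
      replace (lm t x ^ 2) with ((lm t x * cos (phi t x)) ^ 2 + (lm t x * sin (phi t x)) ^ 2)
        by (simpl; nra).
      unfold a, b in Ha, Hb. replace (lm0 t x * cos (phi0 t x)) with (lm t x * cos (phi t x)) by lra.
      replace (lm0 t x * sin (phi0 t x)) with (lm t x * sin (phi t x)) by lra. ring. }
    nra. }
  unfold a, b in Ha, Hb. rewrite Hll in Ha, Hb.
  assert (Ec : cos (phi0 t x) = cos (phi t x)) by (apply (Rmult_eq_reg_l (lm t x)); lra).
  assert (Es : sin (phi0 t x) = sin (phi t x)) by (apply (Rmult_eq_reg_l (lm t x)); lra).
  apply angle_eq; auto.
Qed.

Lemma Dq_cont_t x : continuity (fun u => (phi0 u x - phi u x) / (2 * PI)).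
Proof.
  intros u. apply continuity_pt_filterlim. apply (c2d_cont_t (fun u v => (phi0 u v - phi u v) / (2 * PI))).
  apply c2d_div; [apply continuity_2d_pt_minus; [apply C_phi0|apply C_phi]|apply continuity_2d_pt_const|lra].
Qed.
Lemma Dq_cont_x t : continuity (fun v => (phi0 t v - phi t v) / (2 * PI)).
Proof.
  intros v. apply continuity_pt_filterlim. apply (c2d_cont_x (fun u v => (phi0 u v - phi u v) / (2 * PI))).
  apply c2d_div; [apply continuity_2d_pt_minus; [apply C_phi0|apply C_phi]|apply continuity_2d_pt_const|lra].
Qed.

Lemma const_k : (forall t x, t0 <= t <= t1 -> 0 <= x <= 2 * PI -> Hf t x = 0) ->
  exists k : Z, forall t x, t0 <= t <= t1 -> phi0 t x = phi t x + 2 * IZR k * PI.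
Proof.
  intros H0.
  assert (Hint : forall t x, t0 <= t <= t1 -> 0 <= x <= 2 * PI ->
            exists k : Z, (phi0 t x - phi t x) / (2 * PI) = IZR k).
  { intros t x Ht' Hx. destruct (hf0_angle t x Ht' (H0 t x Ht' Hx)) as [k Hk].
    exists k. rewrite Hk. field. lra. }
  destruct (Hint t0 0 ltac:(lra) ltac:(lra)) as [k Hk].
  exists k. intros t x Ht'.
  assert (Hrect : forall t x, t0 <= t <= t1 -> 0 <= x <= 2 * PI ->
     (phi0 t x - phi t x) / (2 * PI) = IZR k).
  { intros t' x' Ht'' Hx'.
    rewrite (int_valued_const (fun u => (phi0 u x' - phi u x') / (2 * PI)) t0 t'); [| lra | apply Dq_cont_t|].
    2:{ intros s Hs. apply Hint; auto; lra. }
    rewrite (int_valued_const (fun v => (phi0 t0 v - phi t0 v) / (2 * PI)) 0 x'); [| lra | apply Dq_cont_x|].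
    2:{ intros s Hs. apply Hint; auto; lra. }
    exact Hk. }
  set (m := (up (x / (2 * PI)) - 1)%Z).
  destruct (archimed (x / (2 * PI))) as [A1 A2].
  assert (Hm : IZR m = IZR (up (x / (2 * PI))) - 1) by (unfold m; rewrite minus_IZR; auto).
  set (r := x - 2 * IZR m * PI).
  assert (Hr : 0 <= r <= 2 * PI).
  { unfold r. rewrite Hm. split.
    - assert (IZR (up (x / (2 * PI))) - 1 <= x / (2 * PI)) by lra.
      apply (Rmult_le_compat_r (2 * PI)) in H; [|lra].
      unfold Rdiv in H. rewrite Rmult_assoc, Rinv_l in H by lra. lra.
    - apply Rgt_lt in A1. apply (Rmult_lt_compat_r (2 * PI)) in A1; [|lra].
      unfold Rdiv in A1. rewrite Rmult_assoc, Rinv_l in A1 by lra. lra. }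
  assert (Hper : forall y, (fun y => phi0 t y - phi t y) (y + 2 * PI) = (fun y => phi0 t y - phi t y) y).
  { intros y. simpl. rewrite Hphi_lift, L0. ring. }
  pose proof (per_Z _ Hper m r) as Hpz. simpl in Hpz.
  replace (r + 2 * IZR m * PI) with x in Hpz by (unfold r; ring).
  pose proof (Hrect t r Ht' Hr) as Hv.
  assert (phi0 t r - phi t r = 2 * IZR k * PI) by (apply (Rmult_eq_reg_r (/ (2 * PI))); [|apply Rinv_neq_0_compat; lra]; unfold Rdiv in Hv; rewrite Hv; field; lra).
  lra.
Qed.

Lemma conv_eq : (exists k : Z, forall t x, t0 <= t <= t1 -> phi0 t x = phi t x + 2 * IZR k * PI) ->
  forall t x, t0 <= t <= t1 -> en0 t x = en t x.
Proof.
  intros [k Hk].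
  assert (Hx : forall t x, t0 <= t <= t1 -> phi0x t x = phix t x).
  { intros t x Ht'. apply (uniqueness_limite (phi0 t) x); [apply D0x|].
    apply (derivable_pt_lim_ext (fun y => phi t y + 2 * IZR k * PI)); [intros; symmetry; apply Hk; auto|].
    replace (phix t x) with (phix t x + 0) by ring.
    apply derivable_pt_lim_plus; [apply Hphix|apply derivable_pt_lim_const]. }
  intros t x Ht'.
  assert (Ht0 : phi0t t x = phit t x).
  { apply (deriv_agree (fun s => phi0 s x) (fun s => phi s x + 2 * IZR k * PI) t0 t1 t _ _ Ht Ht').
    - intros; apply Hk; auto.
    - apply D0t.
    - replace (phit t x) with (phit t x + 0) by ring.
      apply derivable_pt_lim_plus; [apply Hphit|apply derivable_pt_lim_const]. }
  assert (Hl0 : lam0t t x = lamt t x).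
  { apply (deriv_agree (fun s => lam phi0x s x) (fun s => lam phix s x) t0 t1 t _ _ Ht Ht').
    - intros; unfold lam; rewrite Hx; auto.
    - apply DL0.
    - apply Hlamt. }
  unfold en0, en, lam. rewrite Hx, Ht0, Hl0 by auto. reflexivity.
Qed.

Lemma final E E0 : energy phit phix lamt t0 t1 E -> energy phi0t phi0x lam0t t0 t1 E0 ->
  E <= E0 /\ (E = E0 <-> exists k : Z, forall t x, t0 <= t <= t1 ->
                    phi0 t x = phi t x + 2 * IZR k * PI).
Proof.
  intros HE HE0.
  destruct (energy_conv _ _ _ _ HE) as [I [HI HIi]].
  destruct (energy_conv _ _ _ _ HE0) as [I0 [HI0 HI0i]].
  set (X := RInt (fun t => RInt (Hf t) 0 (2 * PI)) t0 t1).
  set (Y := RInt (fun t => RInt (Rf t) 0 (2 * PI)) t0 t1).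
  set (c := PI ^ 2 / (2 * T ^ 2)).
  assert (HT : 0 < T) by (unfold T; lra).
  assert (exH : forall t, t0 <= t <= t1 -> ex_RInt (Hf t) 0 (2 * PI))
    by (intros; apply ex_at; intros; apply C_Hf, gd_in; auto).
  assert (exR : forall t, t0 <= t <= t1 -> ex_RInt (Rf t) 0 (2 * PI))
    by (intros; apply ex_at; intros; apply C_Rf, gd_in; auto).
  assert (HX : 0 <= X).
  { apply RInt_ge_0; [lra|apply ex_cont_int, Ht_cont|].
    intros t Ht'. apply RInt_ge_0; [lra|apply exH; lra|].
    intros; unfold Hf, Hexp. apply Rplus_le_le_0_compat; apply pow2_ge_0. }
  assert (Hlim : c * X - Y <= / 2 * (E0 - E)).
  { apply (omega_lim X Y _ T HX HT). intros w Hw.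
    apply (ineq_w w Hw I I0 E E0); auto. }
  set (N := fun t => RInt (fun x => c * Hf t x - Rf t x) 0 (2 * PI)).
  assert (HN : forall t, t0 <= t <= t1 -> N t = c * RInt (Hf t) 0 (2 * PI) - RInt (Rf t) 0 (2 * PI)).
  { intros t Ht'. unfold N. rewrite RInt_minusR, RInt_scalR; auto. apply ex_RInt_scalR; auto. }
  assert (Hnn : forall t x, t0 <= t <= t1 -> 0 <= c * Hf t x - Rf t x).
  { intros t x Ht'. destruct (Req_dec (Hf t x) 0) as [E'|E'].
    - rewrite (Rf_zero t x Ht' E'), E'. lra.
    - pose proof (Rf_lt t x Ht' E'). fold c in H. lra. }
  assert (Ncont : forall t, t0 <= t <= t1 -> continuous N t).
  { intros t Ht'. destruct good_nbhd as [r [Hr Hreg]].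
    apply (param_cont _ 0 (2 * PI) t (r / 2)); [lra|lra|].
    intros u x Hu Hx'. apply continuity_2d_pt_minus.
    - apply continuity_2d_pt_mult; [apply continuity_2d_pt_const|]. apply C_Hf; apply (Hreg u x); auto; lra.
    - apply C_Rf; apply (Hreg u x); auto; lra. }
  assert (iN : is_RInt N t0 t1 (c * X - Y)).
  { apply (is_RInt_ext (fun t => c * RInt (Hf t) 0 (2 * PI) - RInt (Rf t) 0 (2 * PI))).
    - intros t Ht'. rewrite Rmin_left, Rmax_right in Ht' by lra. rewrite HN; auto; lra.
    - apply is_RInt_minusR; [apply is_RInt_scalR|].
      + apply (@RInt_correct R_CompleteNormedModule). apply ex_cont_int, Ht_cont.
      + apply (@RInt_correct R_CompleteNormedModule). apply ex_cont_int, Rt_cont. }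
  assert (HNpos : 0 <= c * X - Y).
  { rewrite <- (is_RInt_unique _ _ _ _ iN). apply RInt_ge_0; [lra|eexists; exact iN|].
    intros t Ht'. unfold N. apply RInt_ge_0; [lra| |].
    - apply ex_RInt_minusR; [apply ex_RInt_scalR|]; [apply exH|apply exR]; lra.
    - intros; apply Hnn; lra. }
  split; [lra|split].
  - intros HEE.
    assert (HN0 : forall t, t0 <= t <= t1 -> N t = 0).
    { apply int_zero; auto.
      - intros t Ht'. unfold N. apply RInt_ge_0; [lra| |].
        + apply ex_RInt_minusR; [apply ex_RInt_scalR|]; [apply exH|apply exR]; lra.
        + intros; apply Hnn; lra.
      - rewrite (is_RInt_unique _ _ _ _ iN). lra. }
    apply const_k. intros t x Ht' Hx'.
    assert (Hz : forall y, 0 <= y <= 2 * PI -> c * Hf t y - Rf t y = 0).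
    { apply (int_zero (fun y => c * Hf t y - Rf t y)); [lra| | |].
      - intros y Hy. apply (c2d_cont_x (fun u v => c * Hf u v - Rf u v) t y). apply continuity_2d_pt_minus.
        + apply continuity_2d_pt_mult; [apply continuity_2d_pt_const|]. apply C_Hf, gd_in; auto.
        + apply C_Rf, gd_in; auto.
      - intros; apply Hnn; auto.
      - pose proof (HN0 t Ht') as Z. unfold N in Z. rewrite Z. lra. }
    destruct (Req_dec (Hf t x) 0) as [E'|E']; auto.
    exfalso. pose proof (Rf_lt t x Ht' E'). fold c in H. specialize (Hz x Hx'). lra.
  - intros Hk.
    assert (iI0 : is_RInt I t0 t1 E0).
    { apply (is_RInt_ext I0); [|exact HI0i].
      intros t Ht'. rewrite Rmin_left, Rmax_right in Ht' by lra.
      rewrite HI0, HI by lra. apply RInt_ext. intros; apply conv_eq; auto; lra. }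
    rewrite <- (is_RInt_unique _ _ _ _ HIi), <- (is_RInt_unique _ _ _ _ iI0). reflexivity.
Qed.

End Main.


Theorem mainTheorem2
  (t0 t1 : R) (Ht : t0 < t1)
  (phi phit phitt phix lamt lamtt p px : R -> R -> R)
  (Hphi_smooth : smooth2 phi) (Hphi_lift : circle_lift phi)
  (Hphit : pd_t phi phit) (Hphitt : pd_t phit phitt) (Hphix : pd_x phi phix)
  (Hphix_pos : forall t x, t0 <= t <= t1 -> 0 < phix t x)
  (Hlamt : pd_t (lam phix) lamt) (Hlamtt : pd_t lamt lamtt)
  (Hp_smooth : smooth2 p) (Hp_per : periodic_x p) (Hpx : pd_x p px)
  (Heq1 : forall t x, t0 <= t <= t1 ->
     phitt t x + 2 * (lamt t x / lam phix t x) * phit t x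
       = - / 2 * px t (phi t x))
  (Heq2 : forall t x, t0 <= t <= t1 ->
     lamtt t x - lam phix t x * phit t x ^ 2
       = - lam phix t x * p t (phi t x))
  (Hhess : forall t x r w1 w2 h, t0 <= t <= t1 -> 0 < r ->
     (w1 <> 0 \/ w2 <> 0) ->
     hess_form (p t) x r w1 w2 h ->
     (t1 - t0) ^ 2 * Rabs h < PI ^ 2 * (w1 ^ 2 + w2 ^ 2)) :
  forall (phi0 phi0t phi0x lam0t : R -> R -> R),
    smooth2 phi0 -> circle_lift phi0 ->
    pd_t phi0 phi0t -> pd_x phi0 phi0x ->
    (forall t x, t0 <= t <= t1 -> 0 < phi0x t x) ->
    pd_t (lam phi0x) lam0t ->
    (exists k : Z, forall x, phi0 t0 x = phi t0 x + 2 * IZR k * PI) ->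
    (exists k : Z, forall x, phi0 t1 x = phi t1 x + 2 * IZR k * PI) ->
    forall E E0 : R,
      energy phit phix lamt t0 t1 E ->
      energy phi0t phi0x lam0t t0 t1 E0 ->
      E <= E0 /\
      (E = E0 <-> exists k : Z, forall t x, t0 <= t <= t1 ->
                    phi0 t x = phi t x + 2 * IZR k * PI).
Proof.
  intros phi0 phi0t phi0x lam0t S0 L0 D0t D0x P0 DL0 End0 End1 E E0 HE HE0.
  destruct (smooth2_ex_t phix (smooth2_x _ _ Hphi_smooth Hphix)) as [phixt [Dphixt Sphixt]].
  destruct (smooth2_ex_t phixt Sphixt) as [phixtt [Dphixtt Sphixtt]].
  destruct (smooth2_ex_t phi0x (smooth2_x _ _ S0 D0x)) as [phi0xt [Dphi0xt Sphi0xt]].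
  destruct (smooth2_ex_x px (smooth2_x _ _ Hp_smooth Hpx)) as [pxx [Dpxx _]].
  exact (final t0 t1 Ht phi phit phitt phix lamt lamtt p px Hphi_smooth Hphi_lift Hphit Hphitt Hphix
    Hphix_pos Hlamt Hlamtt Hp_smooth Hp_per Hpx Heq1 Heq2 Hhess phi0 phi0t phi0x lam0t
    S0 L0 D0t D0x P0 DL0 End0 End1 phixt phixtt phi0xt pxx Dphixt Dphixtt Sphixtt Dphi0xt Sphi0xt Dpxx
    E E0 HE HE0).
Qed.
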